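(* Consider the ellipse $\mathcal{E}_{e_0,c}$ and let $\mu_1(\varphi)=a_0e_h(\varphi)+a_1e_{\tau1}(\varphi)+b_1e_{\tau2}(\varphi)+a_2e_{hr}(\varphi)+b_2e_r(\varphi)$, where $a_0,a_1,b_1,a_2,b_2$ are sufficiently small. Then there exist a constant $C=C(e_0,c)$ and an ellipse $\widetilde{\mathcal{E}}=\mathcal{E}_{e_0,c}+\mu_{\widetilde{\mathcal{E}}}$ such that $\|\mu_1-\mu_{\widetilde{\mathcal{E}}}\|_{C^1}\le C\|\mu_1\|_{C^1}^2$.
   Context: $\mathcal{E}_{e_0,c}$ is the ellipse $x^2/a^2+y^2/b^2=1$, $0<b\le a$, eccentricity $e_0=\sqrt{1-b^2/a^2}\in[0,1)$, semi-focal distance $c=\sqrt{a^2-b^2}$; in elliptic coordinates $x=c\cosh\mu\cos\varphi$, $y=c\sinh\mu\sin\varphi$ it is $\{\mu=\mu_0\}$ with $\cosh\mu_0=1/e_0$. For a $2\pi$-periodic function $\nu$, $\mathcal{E}_{e_0,c}+\nu$ denotes the curve $\{(c\cosh(\mu_0+\nu(\varphi))\cos\varphi,\;c\sinh(\mu_0+\nu(\varphi))\sin\varphi)\}$. Elliptic motions: $e_h(\varphi)=\frac{1}{1-e_0^2\cos^2\varphi}$, $e_{\tau1}=\cos\varphi\,e_h$, $e_{\tau2}=\sin\varphi\,e_h$, $e_r=\sin(2\varphi)e_h$, $e_{hr}=\cos(2\varphi)e_h$. *)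

(* Defs.v *)
From Stdlib Require Import Reals Lra.
From Coquelicot Require Import Coquelicot.
Open Scope R_scope.

(* mu_0 = arccosh (1/e0), i.e. cosh mu_0 = 1/e0, mu_0 >= 0. *)
Definition mu0 (e0 : R) : R := ln (/ e0 + sqrt ((/ e0) ^ 2 - 1)).

Definition perturbed_curve (e0 c : R) (nu : R -> R) : R * R -> Prop :=
  fun p => exists phi : R,
    p = (c * cosh (mu0 e0 + nu phi) * cos phi,
         c * sinh (mu0 e0 + nu phi) * sin phi).

Definition is_ellipse (S : R * R -> Prop) : Prop :=
  exists (a11 a12 a21 a22 v1 v2 : R),
    a11 * a22 - a12 * a21 <> 0 /\
    forall p : R * R,
      S p <-> exists t : R,
        p = (a11 * cos t + a12 * sin t + v1, a21 * cos t + a22 * sin t + v2).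

Definition e_h (e0 phi : R) : R := / (1 - e0 ^ 2 * (cos phi) ^ 2).
Definition e_tau1 (e0 phi : R) : R := cos phi * e_h e0 phi.
Definition e_tau2 (e0 phi : R) : R := sin phi * e_h e0 phi.
Definition e_r (e0 phi : R) : R := sin (2 * phi) * e_h e0 phi.
Definition e_hr (e0 phi : R) : R := cos (2 * phi) * e_h e0 phi.

(* sup_phi |f phi| (in the extended reals, +oo if unbounded). *)
Definition sup_abs (f : R -> R) : Rbar :=
  Lub_Rbar (fun y => exists x : R, y = Rabs (f x)).

Definition C1norm (f : R -> R) : Rbar :=
  Rbar_plus (sup_abs f) (sup_abs (Derive f)).

Definition periodic_C1 (nu : R -> R) : Prop :=
  (forall x, nu (x + 2 * PI) = nu x) /\
  (forall x, ex_derive nu x) /\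
  (forall x, continuous (Derive nu) x).

(* Main.v *)
Require Import Defs.
From Stdlib Require Import Reals Lra Psatz.
From Coquelicot Require Import Coquelicot.
Open Scope R_scope.


Lemma add_bound a b A B : Rabs a <= A -> Rabs b <= B -> Rabs (a + b) <= A + B.
Proof. intros; eapply Rle_trans; [apply Rabs_triang|lra]. Qed.
Lemma sub_bound a b A B : Rabs a <= A -> Rabs b <= B -> Rabs (a - b) <= A + B.
Proof. intros; eapply Rle_trans; [apply Rabs_triang|]. rewrite Rabs_Ropp; lra. Qed.
Lemma opp_bound a A : Rabs a <= A -> Rabs (- a) <= A.
Proof. rewrite Rabs_Ropp; auto. Qed.
Lemma mult_bound a b A B : Rabs a <= A -> Rabs b <= B -> Rabs (a * b) <= A * B.
Proof. intros. rewrite Rabs_mult. apply Rmult_le_compat; auto using Rabs_pos. Qed.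
Lemma div_bound a b A B : Rabs a <= A -> Rabs (/ b) <= B -> Rabs (a / b) <= A * B.
Proof. intros. unfold Rdiv. now apply mult_bound. Qed.
Lemma pow_bound a A n : Rabs a <= A -> Rabs (a ^ n) <= A ^ n.
Proof. intros H. rewrite <- RPow_abs. apply pow_incr. split; auto using Rabs_pos. Qed.

Ltac bnd := first
  [ eassumption
  | lazymatch goal with
    | |- Rabs (_ + _) <= _ => eapply add_bound; bnd
    | |- Rabs (_ - _) <= _ => eapply sub_bound; bnd
    | |- Rabs (- _) <= _ => eapply opp_bound; bnd
    | |- Rabs (_ * _) <= _ => eapply mult_bound; bnd
    | |- Rabs (_ / _) <= _ => eapply div_bound; bnd
    | |- Rabs (_ ^ _) <= _ => eapply pow_bound; bnd
    | |- Rabs _ <= _ => apply Rle_refl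
    end ].

Ltac finish_homog eps :=
  match goal with |- ?U <= ?K * _ =>
    let f := eval pattern eps in U in
    match f with ?F _ =>
      let V := eval cbv beta in (F 1) in
      unify K V; apply Req_le; ring
    end end.

Lemma cont2_ed (f : R*R -> R) x y : continuous f (x,y) -> forall eps, 0 < eps ->
  exists d, 0 < d /\ forall u v, Rabs (u - x) < d -> Rabs (v - y) < d ->
  Rabs (f (u,v) - f (x,y)) < eps.
Proof.
intros H eps Heps.
destruct (H (ball (f (x,y)) eps)) as [d Hd].
{ apply (locally_ball (f (x,y)) (mkposreal _ Heps)). }
exists d; split. apply cond_pos.
intros u v Hu Hv. apply (Hd (u,v)). split; [exact Hu | exact Hv].
Qed.

Lemma cont1_ed (f : R -> R) x : continuous f x -> forall eps, 0 < eps ->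
  exists d, 0 < d /\ forall u, Rabs (u - x) < d -> Rabs (f u - f x) < eps.
Proof.
intros H eps Heps.
destruct (H (ball (f x) eps)) as [d Hd].
{ apply (locally_ball (f x) (mkposreal _ Heps)). }
exists d; split. apply cond_pos.
intros u Hu. apply (Hd u). exact Hu.
Qed.

Lemma c_plus (f g : R*R -> R) z : continuous f z -> continuous g z ->
  continuous (fun z => f z + g z) z.
Proof. intros; apply (continuous_plus f g); auto. Qed.
Lemma c_minus (f g : R*R -> R) z : continuous f z -> continuous g z ->
  continuous (fun z => f z - g z) z.
Proof. intros; apply (continuous_plus f (fun z => - g z)); auto. apply (continuous_opp g); auto. Qed.
Lemma c_mult (f g : R*R -> R) z : continuous f z -> continuous g z ->
  continuous (fun z => f z * g z) z.
Proof. intros; apply (continuous_mult f g); auto. Qed.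
Lemma c_opp (f : R*R -> R) z : continuous f z -> continuous (fun z => - f z) z.
Proof. intros; apply (continuous_opp f); auto. Qed.
Lemma c_const (c : R) (z : R*R) : continuous (fun _ => c) z.
Proof. apply continuous_const. Qed.
Lemma c_divc (f : R*R -> R) b z : continuous f z -> continuous (fun z => f z / b) z.
Proof. intros; unfold Rdiv. apply c_mult; auto. apply c_const. Qed.
Lemma c_pow (f : R*R -> R) n z : continuous f z -> continuous (fun z => f z ^ n) z.
Proof. intros H; induction n; simpl. apply c_const. apply c_mult; auto. Qed.
Lemma c_fst_comp (u : R -> R) (z : R*R) : (forall x, continuous u x) ->
  continuous (fun z => u (fst z)) z.
Proof. intros H; destruct z as [x y]. apply (continuous_comp fst u). apply continuous_fst. apply H. Qed.
Lemma c_snd_comp (u : R -> R) (z : R*R) : (forall x, continuous u x) ->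
  continuous (fun z => u (snd z)) z.
Proof. intros H; destruct z as [x y]. apply (continuous_comp snd u). apply continuous_snd. apply H. Qed.

Lemma cont_of_derive (f : R -> R) : (forall x, ex_derive f x) -> forall x, continuous f x.
Proof. intros H x. apply (ex_derive_continuous (V:=R_NormedModule)). apply H. Qed.

Lemma cont_cos x : continuous cos x.
Proof. apply cont_of_derive. intros; auto_derive; auto. Qed.
Lemma cont_sin x : continuous sin x.
Proof. apply cont_of_derive. intros; auto_derive; auto. Qed.
Lemma cont_cosh m x : continuous (fun x => cosh (m + x)) x.
Proof. apply cont_of_derive. intros; unfold cosh; auto_derive; auto. Qed.
Lemma cont_sinh m x : continuous (fun x => sinh (m + x)) x.
Proof. apply cont_of_derive. intros; unfold sinh; auto_derive; auto. Qed.

Ltac cont := first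
  [ apply c_const
  | lazymatch goal with
    | |- continuous (fun z => @?f z + @?g z) _ => apply (c_plus f g); cont
    | |- continuous (fun z => @?f z - @?g z) _ => apply (c_minus f g); cont
    | |- continuous (fun z => @?f z * @?g z) _ => apply (c_mult f g); cont
    | |- continuous (fun z => - @?f z) _ => apply (c_opp f); cont
    | |- continuous (fun z => @?f z / _) _ => apply (c_divc f); cont
    | |- continuous (fun z => @?f z ^ _) _ => apply (c_pow f); cont
    | |- continuous (fun z => cos (snd z)) _ => apply (c_snd_comp cos); apply cont_cos
    | |- continuous (fun z => sin (snd z)) _ => apply (c_snd_comp sin); apply cont_sin
    | |- continuous (fun z => cosh (?m + fst z)) _ => apply (c_fst_comp (fun x => cosh (m + x))); apply cont_cosh
    | |- continuous (fun z => sinh (?m + fst z)) _ => apply (c_fst_comp (fun x => sinh (m + x))); apply cont_sinh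
    end ].


Lemma deriv_contpt (f : R -> R) x l : is_derive f x l -> continuity_pt f x.
Proof. intros H. apply continuity_pt_filterlim. apply (ex_derive_continuous (V:=R_NormedModule)). exists l; exact H. Qed.

Lemma mono_F (F Fs : R -> R -> R) r m φ s1 s2 :
  (forall s, is_derive (fun s => F s φ) s (Fs s φ)) ->
  (forall s, -r <= s <= r -> m <= Fs s φ) ->
  -r <= s1 -> s1 <= s2 -> s2 <= r -> m * (s2 - s1) <= F s2 φ - F s1 φ.
Proof.
intros Hd Hm H1 H2 H3.
destruct (MVT_gen (fun s => F s φ) s1 s2 (fun s => Fs s φ)) as [c [Hc Heq]].
- intros; apply Hd.
- intros; eapply deriv_contpt; apply Hd.
- rewrite Rmin_left in Hc by lra. rewrite Rmax_right in Hc by lra.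
  simpl in Heq. rewrite Heq. apply Rmult_le_compat_r. lra. apply Hm; lra.
Qed.

Lemma implicit (F Fs Fp : R -> R -> R) (r m : R) :
  0 < r -> 0 < m ->
  (forall φ, F (-r) φ < 0) -> (forall φ, 0 < F r φ) ->
  (forall s φ, is_derive (fun s => F s φ) s (Fs s φ)) ->
  (forall s φ, -r <= s <= r -> m <= Fs s φ) ->
  (forall s φ, is_derive (fun φ => F s φ) φ (Fp s φ)) ->
  (forall s φ, continuous (fun z => Fs (fst z) (snd z)) (s,φ)) ->
  (forall s φ, continuous (fun z => Fp (fst z) (snd z)) (s,φ)) ->
  (forall s φ, F s (φ + 2*PI) = F s φ) ->
  exists nu : R -> R,
   (forall φ, -r < nu φ < r /\ F (nu φ) φ = 0) /\
   (forall φ s, -r <= s <= r -> F s φ = 0 -> s = nu φ) /\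
   (forall φ, nu (φ + 2*PI) = nu φ) /\
   (forall φ, is_derive nu φ (- Fp (nu φ) φ / Fs (nu φ) φ)) /\
   (forall φ, continuous (fun φ => - Fp (nu φ) φ / Fs (nu φ) φ) φ).
Proof.
intros Hr Hm Hneg Hpos Hds Hms Hdp Hcs Hcp Hper.
assert (X : forall φ, {z | -r <= z <= r /\ F z φ = 0}).
{ intros φ. apply IVT; auto; try lra.
  intros x; eapply deriv_contpt; apply Hds. }
set (nu := fun φ => proj1_sig (X φ)).
assert (Hnu : forall φ, -r <= nu φ <= r /\ F (nu φ) φ = 0).
{ intros φ; unfold nu; destruct (X φ); simpl; auto. }
assert (Huniq : forall φ s, -r <= s <= r -> F s φ = 0 -> s = nu φ).
{ intros φ s Hs HF. destruct (Hnu φ) as [Hn HFn].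
  destruct (Rtotal_order s (nu φ)) as [Hlt|[Heq|Hgt]]; auto.
  - pose proof (mono_F F Fs r m φ s (nu φ) (fun s => Hds s φ) (fun s => Hms s φ)).
    assert (m * (nu φ - s) <= F (nu φ) φ - F s φ) by (apply H; lra). nra.
  - pose proof (mono_F F Fs r m φ (nu φ) s (fun s => Hds s φ) (fun s => Hms s φ)).
    assert (m * (s - nu φ) <= F s φ - F (nu φ) φ) by (apply H; lra). nra. }
assert (Hin : forall φ, -r < nu φ < r).
{ intros φ. destruct (Hnu φ) as [Hn HFn]. split.
  - destruct (Req_dec (nu φ) (-r)) as [E|E]; [|lra]. specialize (Hneg φ). rewrite <- E in Hneg. lra.
  - destruct (Req_dec (nu φ) r) as [E|E]; [|lra]. specialize (Hpos φ). rewrite <- E in Hpos. lra. }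
assert (Hder : forall φ0, is_derive nu φ0 (- Fp (nu φ0) φ0 / Fs (nu φ0) φ0)).
{ intros φ0. apply (proj2 (is_derive_Reals _ _ _)). intros eps Heps.
  set (n0 := nu φ0). set (S0 := Fs n0 φ0). set (P0 := Fp n0 φ0).
  assert (HS0 : m <= S0) by (apply Hms; apply (proj1 (Hnu φ0))).
  assert (HF0 : F n0 φ0 = 0) by (apply Hnu).
  set (e1 := eps * m / 2).
  assert (He1 : 0 < e1) by (unfold e1; nra).
  pose proof (proj1 (is_derive_Reals _ _ _) (Hdp n0 φ0) e1 He1) as [d1 Hd1].
  set (e2 := eps * m * m / (2 * (Rabs P0 + 1))).
  assert (HP0 : 0 < Rabs P0 + 1) by (pose proof (Rabs_pos P0); lra).
  assert (He2 : 0 < e2) by (unfold e2; apply Rdiv_lt_0_compat; [|lra]; repeat apply Rmult_lt_0_compat; lra).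
  destruct (cont2_ed _ _ _ (Hcs n0 φ0) e2 He2) as [d2 [Hd2 Hd2']].
  assert (Hc3 : continuous (fun v => F n0 v) φ0).
  { apply (ex_derive_continuous (V:=R_NormedModule)). exists P0. apply Hdp. }
  assert (Hd2m : 0 < d2 * m) by nra.
  destruct (cont1_ed _ _ Hc3 (d2 * m) Hd2m) as [d3 [Hd3 Hd3']].
  assert (Hd : 0 < Rmin d1 (Rmin d2 d3)).
  { pose proof (cond_pos d1). repeat apply Rmin_pos; lra. }
  exists (mkposreal _ Hd). intros h Hh0 Hh. simpl in Hh.
  assert (Hh1 : Rabs h < d1) by (eapply Rlt_le_trans; [exact Hh|]; apply Rmin_l).
  assert (Hh2 : Rabs h < d2) by (eapply Rlt_le_trans; [exact Hh|]; eapply Rle_trans; [apply Rmin_r|apply Rmin_l]).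
  assert (Hh3 : Rabs h < d3) by (eapply Rlt_le_trans; [exact Hh|]; eapply Rle_trans; [apply Rmin_r|apply Rmin_r]).
  set (n1 := nu (φ0 + h)).
  assert (HF1 : F n1 (φ0 + h) = 0) by apply Hnu.
  assert (Hn0 : -r <= n0 <= r) by apply Hnu.
  assert (Hn1 : -r <= n1 <= r) by apply Hnu.
  destruct (MVT_gen (fun s => F s (φ0 + h)) n0 n1 (fun s => Fs s (φ0 + h))) as [xi [Hxi Heq]].
  { intros; apply Hds. }
  { intros; eapply deriv_contpt; apply Hds. }
  simpl in Heq.
  assert (Hxr : -r <= xi <= r).
  { split; [eapply Rle_trans; [|apply Hxi]; apply Rmin_glb; lra
          | eapply Rle_trans; [apply Hxi|]; apply Rmax_lub; lra]. }
  set (Sx := Fs xi (φ0 + h)) in *.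
  assert (HSx : m <= Sx) by (apply Hms; auto).
  set (D := F n0 (φ0 + h)) in *.
  assert (HD : Rabs (D - F n0 φ0) < d2 * m).
  { apply Hd3'. replace (φ0 + h - φ0) with h by ring. auto. }
  rewrite HF0, Rminus_0_r in HD.
  assert (Hn10 : n1 - n0 = - D / Sx) by (field_simplify_eq; [lra|lra]).
  assert (Hn10b : Rabs (n1 - n0) < d2).
  { rewrite Hn10. unfold Rdiv. rewrite Rabs_mult, Rabs_Ropp, Rabs_inv, (Rabs_right Sx) by lra.
    apply (Rmult_lt_reg_r Sx); [lra|]. rewrite Rmult_assoc, Rinv_l by lra. nra. }
  assert (Hxib : Rabs (xi - n0) < d2).
  { destruct (Rle_dec n0 n1).
    - rewrite Rmin_left in Hxi by lra. rewrite Rmax_right in Hxi by lra.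
      rewrite Rabs_right in Hn10b by lra. rewrite Rabs_right by lra. lra.
    - rewrite Rmin_right in Hxi by lra. rewrite Rmax_left in Hxi by lra.
      rewrite Rabs_left in Hn10b by lra. rewrite Rabs_left1 by lra. lra. }
  assert (HSxb : Rabs (Sx - S0) < e2).
  { apply (Hd2' xi (φ0 + h)); auto. replace (φ0 + h - φ0) with h by ring; auto. }
  assert (HQ : Rabs ((F n0 (φ0 + h) - F n0 φ0) / h - P0) < e1) by (apply Hd1; auto).
  rewrite HF0, Rminus_0_r in HQ. fold D in HQ.
  set (Q := D / h) in *.
  replace ((n1 - n0) / h - - P0 / S0) with
     ((- (Q - P0) * S0 + P0 * (Sx - S0)) / (Sx * S0)).
  2:{ rewrite Hn10. unfold Q. field. repeat split; lra. }
  unfold Rdiv. rewrite Rabs_mult, Rabs_inv, (Rabs_right (Sx * S0)) by nra.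
  apply (Rmult_lt_reg_r (Sx * S0)); [nra|]. rewrite Rmult_assoc, Rinv_l by nra. rewrite Rmult_1_r.
  eapply Rle_lt_trans; [apply Rabs_triang|]. rewrite !Rabs_mult, Rabs_Ropp, (Rabs_right S0) by lra.
  assert (Rabs (Q - P0) * S0 <= e1 * S0) by (apply Rmult_le_compat_r; lra).
  assert (Rabs P0 * Rabs (Sx - S0) <= Rabs P0 * e2) by (apply Rmult_le_compat_l; [apply Rabs_pos|lra]).
  assert (HP : Rabs P0 * e2 <= eps * m * m / 2).
  { unfold e2. apply (Rmult_le_reg_r (2 * (Rabs P0 + 1))); [lra|].
    field_simplify; [|lra]. pose proof (Rabs_pos P0). assert (0 <= eps * m * m) by (repeat apply Rmult_le_pos; lra). nra. }
  assert (e1 * S0 = eps * m / 2 * S0) by reflexivity.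
  assert (eps * m * m <= eps * Sx * S0). { assert (0 <= eps * m) by nra. assert (m * m <= Sx * S0) by nra. nra. }
  assert (0 < eps * m * S0) by (repeat apply Rmult_lt_0_compat; lra).
  assert (Rabs (Q - P0) * S0 < e1 * S0) by (apply Rmult_lt_compat_r; lra).
  assert (eps * m * m <= eps * m * S0) by (apply Rmult_le_compat_l; nra).
  assert (eps * m * S0 <= eps * Sx * S0) by (apply Rmult_le_compat_r; nra).
  assert (eps * Sx * S0 = eps * (Sx * S0)) by ring.
  lra. }
assert (Hcnu : forall φ, continuous nu φ).
{ intros φ. apply (ex_derive_continuous (V:=R_NormedModule)). eexists; apply Hder. }
exists nu. split; [|split; [|split; [|split]]].
- intros φ; split; [apply Hin|apply Hnu].
- exact Huniq.
- intros φ. apply Huniq. apply Hnu. rewrite <- (Hper (nu (φ + 2*PI)) φ). apply Hnu.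
- exact Hder.
- intros φ.
  assert (C1 : continuous (fun φ => Fp (nu φ) φ) φ).
  { apply (continuous_comp_2 nu (fun x => x) Fp). apply Hcnu. apply continuous_id. apply Hcp. }
  assert (C2 : continuous (fun φ => Fs (nu φ) φ) φ).
  { apply (continuous_comp_2 nu (fun x => x) Fs). apply Hcnu. apply continuous_id. apply Hcs. }
  apply continuity_pt_filterlim in C1. apply continuity_pt_filterlim in C2.
  apply continuity_pt_filterlim.
  assert (Hne : Fs (nu φ) φ <> 0) by (specialize (Hms (nu φ) φ); destruct (Hnu φ); assert (m <= Fs (nu φ) φ) by (apply Hms; lra); lra).
  apply (continuity_pt_div (fun φ => - Fp (nu φ) φ) (fun φ => Fs (nu φ) φ)); auto.
  apply (continuity_pt_opp (fun φ => Fp (nu φ) φ)); auto.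
Qed.


Ltac nz := repeat split; first [apply Rgt_not_eq; nra | apply Rlt_not_eq; nra | idtac].

Definition ch0 (e : R) := / e.
Definition sh0 (e : R) := sqrt ((/ e) ^ 2 - 1).
Definition Cs e s := cosh (mu0 e + s).
Definition Ss e s := sinh (mu0 e + s).

Lemma cosh_sq x : cosh x ^ 2 = 1 + sinh x ^ 2.
Proof. unfold cosh, sinh. rewrite exp_Ropp. assert (exp x > 0) by apply exp_pos. field. lra. Qed.
Lemma cosh_plus a b : cosh (a + b) = cosh a * cosh b + sinh a * sinh b.
Proof. unfold cosh, sinh. rewrite !exp_Ropp, exp_plus.
  assert (exp a > 0) by apply exp_pos. assert (exp b > 0) by apply exp_pos. field. lra. Qed.
Lemma sinh_plus a b : sinh (a + b) = sinh a * cosh b + cosh a * sinh b.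
Proof. unfold cosh, sinh. rewrite !exp_Ropp, exp_plus.
  assert (exp a > 0) by apply exp_pos. assert (exp b > 0) by apply exp_pos. field. lra. Qed.
Lemma cosh_pos x : 0 < cosh x.
Proof. unfold cosh. pose proof (exp_pos x). pose proof (exp_pos (-x)). lra. Qed.

Section Basics.
Lemma sh0_pos e : 0 < e < 1 -> 0 < sh0 e.
Proof. intros. unfold sh0. apply sqrt_lt_R0.
  assert (1 < / e) by (rewrite <- Rinv_1; apply Rinv_lt_contravar; lra). nra. Qed.
Lemma sh0_sq e : 0 < e < 1 -> sh0 e ^ 2 = (/ e) ^ 2 - 1.
Proof. intros. unfold sh0. rewrite pow2_sqrt. auto.
  assert (1 < / e) by (rewrite <- Rinv_1; apply Rinv_lt_contravar; lra). nra. Qed.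
Lemma e_sh0 e : 0 < e < 1 -> e ^ 2 * (1 + sh0 e ^ 2) = 1.
Proof. intros. rewrite sh0_sq by auto. field. lra. Qed.
Lemma ch0_pos e : 0 < e < 1 -> 0 < ch0 e.
Proof. intros. unfold ch0. apply Rinv_0_lt_compat; lra. Qed.
Lemma e_ch0 e : 0 < e < 1 -> e * ch0 e = 1.
Proof. intros. unfold ch0. field. lra. Qed.

Lemma mu0_exp e : 0 < e < 1 -> exp (mu0 e) = / e + sh0 e.
Proof. intros. unfold mu0. rewrite exp_ln. reflexivity.
  pose proof (sh0_pos e H). assert (0 < / e) by (apply Rinv_0_lt_compat; lra). fold (sh0 e). lra. Qed.
Lemma inv_y e : 0 < e < 1 -> / (/ e + sh0 e) = / e - sh0 e.
Proof. intros. pose proof (sh0_sq e H). pose proof (sh0_pos e H).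
  assert (0 < / e) by (apply Rinv_0_lt_compat; lra).
  rewrite <- (Rmult_1_l (/ (/ e + sh0 e))).
  assert (E : (/ e - sh0 e) * (/ e + sh0 e) = 1) by (ring_simplify; rewrite H0; ring).
  rewrite <- E at 1. field. nz. Qed.
Lemma cosh_mu0 e : 0 < e < 1 -> cosh (mu0 e) = ch0 e.
Proof. intros. unfold cosh. rewrite exp_Ropp, mu0_exp, inv_y by auto. unfold ch0. pose proof (sh0_pos e H). field. nz. Qed.
Lemma sinh_mu0 e : 0 < e < 1 -> sinh (mu0 e) = sh0 e.
Proof. intros. unfold sinh. rewrite exp_Ropp, mu0_exp, inv_y by auto. pose proof (sh0_pos e H). field. nz. Qed.
Lemma mu0_pos e : 0 < e < 1 -> 0 < mu0 e.
Proof. intros. pose proof (sinh_mu0 e H). pose proof (sh0_pos e H).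
  destruct (Rle_dec (mu0 e) 0) as [Hle|]; [|lra].
  destruct (Req_dec (mu0 e) 0) as [E|E].
  - rewrite E, sinh_0 in H0. lra.
  - assert (sinh (mu0 e) < sinh 0) by (apply sinh_lt; lra). rewrite sinh_0 in H2. lra. Qed.
End Basics.

Lemma exp_le3 s : Rabs s <= 1 -> exp s <= 3.
Proof. intros. apply Rle_trans with (exp 1). destruct (Req_dec s 1). subst; lra.
  left. apply exp_increasing. apply Rabs_le_between in H. lra. apply exp_le_3. Qed.
Lemma cosh_le3 s : Rabs s <= 1 -> Rabs (cosh s) <= 3.
Proof. intros H. rewrite Rabs_right by (left; apply cosh_pos). unfold cosh.
  pose proof (exp_le3 s H) as A1. assert (A2 : Rabs (-s) <= 1) by (rewrite Rabs_Ropp; auto).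
  pose proof (exp_le3 (-s) A2). lra. Qed.
Lemma sinh_le3 s : Rabs s <= 1 -> Rabs (sinh s) <= 3.
Proof. intros H. unfold sinh.
  pose proof (exp_le3 s H) as A1. assert (A2 : Rabs (-s) <= 1) by (rewrite Rabs_Ropp; auto).
  pose proof (exp_le3 (-s) A2). pose proof (exp_pos s). pose proof (exp_pos (-s)).
  apply Rabs_le; lra. Qed.

Lemma is_derive_cosh x : is_derive cosh x (sinh x).
Proof. apply is_derive_Reals, derivable_pt_lim_cosh. Qed.
Lemma is_derive_sinh x : is_derive sinh x (cosh x).
Proof. apply is_derive_Reals, derivable_pt_lim_sinh. Qed.

Lemma deriv_contpt' (f : R -> R) x l : is_derive f x l -> continuity_pt f x.
Proof. intros H. apply continuity_pt_filterlim. apply (ex_derive_continuous (V:=R_NormedModule)). exists l; exact H. Qed.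

Lemma mvt0 (f df : R -> R) s : (forall x, is_derive f x (df x)) ->
  exists c, Rabs c <= Rabs s /\ f s - f 0 = df c * s.
Proof. intros Hd.
  destruct (MVT_gen f 0 s df) as [c [Hc Heq]].
  - intros; apply Hd.
  - intros; eapply deriv_contpt'; apply Hd.
  - exists c; split; [|rewrite Heq; ring].
    destruct (Rle_dec 0 s).
    + rewrite Rmin_left, Rmax_right in Hc by lra. rewrite !Rabs_right by lra. lra.
    + rewrite Rmin_right, Rmax_left in Hc by lra. rewrite !Rabs_left1 by lra. lra.
Qed.

Lemma sinh_lin s : Rabs s <= 1 -> Rabs (sinh s) <= 3 * Rabs s.
Proof. intros H. destruct (mvt0 sinh cosh s is_derive_sinh) as [c [Hc E]].
  rewrite sinh_0, Rminus_0_r in E. rewrite E, Rabs_mult.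
  apply Rmult_le_compat_r. apply Rabs_pos. apply cosh_le3; lra. Qed.
Lemma cosh_quad s : Rabs s <= 1 -> Rabs (cosh s - 1) <= 3 * s ^ 2.
Proof. intros H. destruct (mvt0 cosh sinh s is_derive_cosh) as [c [Hc E]].
  rewrite cosh_0 in E. rewrite E, Rabs_mult.
  pose proof (sinh_lin c ltac:(lra)). pose proof (Rabs_pos s). pose proof (Rabs_pos c).
  replace (s ^ 2) with (Rabs s * Rabs s) by (rewrite <- Rabs_mult; rewrite Rabs_right by nra; ring).
  nra. Qed.
Lemma sinh_quad s : Rabs s <= 1 -> Rabs (sinh s - s) <= 3 * s ^ 2.
Proof. intros H. destruct (mvt0 (fun x => sinh x - x) (fun x => cosh x - 1) s) as [c [Hc E]].
  { intros x. apply (is_derive_minus sinh (fun x => x) x (cosh x) 1); [apply is_derive_sinh| exact (is_derive_id (K:=R_AbsRing) x)]. }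
  rewrite sinh_0 in E. replace (sinh s - s) with (sinh s - s - (0 - 0)) by ring. rewrite E, Rabs_mult.
  pose proof (cosh_quad c ltac:(lra)). pose proof (Rabs_pos s). pose proof (Rabs_pos c).
  assert (c ^ 2 <= Rabs c) by (rewrite <- (Rabs_right (c^2)) by nra; rewrite <- RPow_abs; simpl; nra).
  replace (s ^ 2) with (Rabs s * Rabs s) by (rewrite <- Rabs_mult; rewrite Rabs_right by nra; ring).
  nra. Qed.


Definition g1 e s φ := e * Cs e s * cos φ.
Definition g2 e s φ := Ss e s * sin φ / sh0 e.
Definition g1s e s φ := e * Ss e s * cos φ.
Definition g2s e s φ := Cs e s * sin φ / sh0 e.
Definition g1p e s φ := - (e * Cs e s * sin φ).
Definition g2p e s φ := Ss e s * cos φ / sh0 e.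

Definition X1 e p q (r : R) w1 (w2 : R) s φ := g1 e s φ + (p * g1 e s φ + q * g2 e s φ + w1).
Definition X2 e (p : R) q r (w1 : R) w2 s φ := g2 e s φ + (q * g1 e s φ + r * g2 e s φ + w2).
Definition FF e p q r w1 w2 s φ := X1 e p q r w1 w2 s φ ^ 2 + X2 e p q r w1 w2 s φ ^ 2 - 1.
Definition FFs e p q r w1 w2 s φ :=
  2 * X1 e p q r w1 w2 s φ * (g1s e s φ + (p * g1s e s φ + q * g2s e s φ))
  + 2 * X2 e p q r w1 w2 s φ * (g2s e s φ + (q * g1s e s φ + r * g2s e s φ)).
Definition FFp e p q r w1 w2 s φ :=
  2 * X1 e p q r w1 w2 s φ * (g1p e s φ + (p * g1p e s φ + q * g2p e s φ))
  + 2 * X2 e p q r w1 w2 s φ * (g2p e s φ + (q * g1p e s φ + r * g2p e s φ)).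

Definition Dd e φ := e ^ 2 * cos φ ^ 2 + sin φ ^ 2 / sh0 e ^ 2.
Definition Dp e φ := 2 * sin φ * cos φ * (/ sh0 e ^ 2 - e ^ 2).
Definition kk e := 2 * sh0 e * ch0 e.
Definition Lf p q r w1 w2 φ :=
  2 * (cos φ * (p * cos φ + q * sin φ + w1) + sin φ * (q * cos φ + r * sin φ + w2)).
Definition Lp p q r w1 w2 φ :=
  2 * (cos φ * (- p * sin φ + q * cos φ) - sin φ * (p * cos φ + q * sin φ + w1)
     + sin φ * (- q * sin φ + r * cos φ) + cos φ * (q * cos φ + r * sin φ + w2)).
Definition muL e p q r w1 w2 φ := - Lf p q r w1 w2 φ / (kk e * Dd e φ).
Definition muLp e p q r w1 w2 φ :=
  - (Lp p q r w1 w2 φ + kk e * Dp e φ * muL e p q r w1 w2 φ) / (kk e * Dd e φ).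

Ltac unf := unfold FF, FFs, FFp, X1, X2, g1, g2, g1s, g2s, g1p, g2p, Cs, Ss in *.

Lemma FF_ds e p q r w1 w2 s φ : 0 < e < 1 ->
  is_derive (fun s => FF e p q r w1 w2 s φ) s (FFs e p q r w1 w2 s φ).
Proof. intros He. pose proof (sh0_pos e He). unf. unfold cosh, sinh.
  auto_derive; auto. field. nz. Qed.

Lemma FF_dp e p q r w1 w2 s φ : 0 < e < 1 ->
  is_derive (fun φ => FF e p q r w1 w2 s φ) φ (FFp e p q r w1 w2 s φ).
Proof. intros He. pose proof (sh0_pos e He). unf.
  auto_derive; auto. field. nz. Qed.

Lemma FFs_cont e p q r w1 w2 s φ :
  continuous (fun z => FFs e p q r w1 w2 (fst z) (snd z)) (s, φ).
Proof. unf. cont. Qed.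
Lemma FFp_cont e p q r w1 w2 s φ :
  continuous (fun z => FFp e p q r w1 w2 (fst z) (snd z)) (s, φ).
Proof. unf. cont. Qed.

Lemma FF_per e p q r w1 w2 s φ : FF e p q r w1 w2 s (φ + 2 * PI) = FF e p q r w1 w2 s φ.
Proof. unf. replace (cos (φ + 2 * PI)) with (cos φ) by (rewrite cos_plus, cos_2PI, sin_2PI; ring).
  replace (sin (φ + 2 * PI)) with (sin φ) by (rewrite sin_plus, cos_2PI, sin_2PI; ring). reflexivity. Qed.

Lemma g_sq e s φ : 0 < e < 1 ->
  g1 e s φ ^ 2 + g2 e s φ ^ 2 - 1 = (Ss e s ^ 2 - sh0 e ^ 2) * Dd e φ.
Proof. intros He. pose proof (sh0_pos e He).
  assert (E1 : Cs e s ^ 2 - 1 - Ss e s ^ 2 = 0) by (unfold Cs, Ss; rewrite cosh_sq; ring).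
  assert (E2 : e ^ 2 * (1 + sh0 e ^ 2) - 1 = 0) by (rewrite e_sh0; auto; ring).
  assert (E3 : cos φ ^ 2 + sin φ ^ 2 - 1 = 0) by (rewrite <- (sin2_cos2 φ); unfold Rsqr; ring).
  transitivity ((Ss e s ^ 2 - sh0 e ^ 2) * Dd e φ + e ^ 2 * cos φ ^ 2 * (Cs e s ^ 2 - 1 - Ss e s ^ 2)
     + cos φ ^ 2 * (e ^ 2 * (1 + sh0 e ^ 2) - 1) + (cos φ ^ 2 + sin φ ^ 2 - 1)).
  - unfold g1, g2, Dd. field. nz.
  - rewrite E1, E2, E3. ring. Qed.

Lemma g_dp e s φ : 0 < e < 1 ->
  2 * (g1 e s φ * g1p e s φ + g2 e s φ * g2p e s φ) = (Ss e s ^ 2 - sh0 e ^ 2) * Dp e φ.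
Proof. intros He. pose proof (sh0_pos e He).
  assert (E1 : Cs e s ^ 2 - 1 - Ss e s ^ 2 = 0) by (unfold Cs, Ss; rewrite cosh_sq; ring).
  assert (E2 : e ^ 2 * (1 + sh0 e ^ 2) - 1 = 0) by (rewrite e_sh0; auto; ring).
  transitivity ((Ss e s ^ 2 - sh0 e ^ 2) * Dp e φ
     + 2 * sin φ * cos φ * (- e ^ 2 * (Cs e s ^ 2 - 1 - Ss e s ^ 2) - (e ^ 2 * (1 + sh0 e ^ 2) - 1))).
  - unfold g1, g2, g1p, g2p, Dp. field. nz.
  - rewrite E1, E2. ring. Qed.

Lemma g_ds e s φ : 0 < e < 1 ->
  g1 e s φ * g1s e s φ + g2 e s φ * g2s e s φ = Cs e s * Ss e s * Dd e φ.
Proof. intros He. pose proof (sh0_pos e He). unfold g1, g2, g1s, g2s, Dd. field. nz. Qed.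

Lemma g1_diff e s φ : 0 < e < 1 -> g1 e s φ - cos φ = e * (Cs e s - ch0 e) * cos φ.
Proof. intros He. unfold g1, ch0. field. nz. Qed.
Lemma g2_diff e s φ : 0 < e < 1 -> g2 e s φ - sin φ = (Ss e s - sh0 e) * sin φ / sh0 e.
Proof. intros He. pose proof (sh0_pos e He). unfold g2. field. nz. Qed.
Lemma g1p_diff e s φ : 0 < e < 1 -> g1p e s φ - - sin φ = - (e * (Cs e s - ch0 e) * sin φ).
Proof. intros He. unfold g1p, ch0. field. nz. Qed.
Lemma g2p_diff e s φ : 0 < e < 1 -> g2p e s φ - cos φ = (Ss e s - sh0 e) * cos φ / sh0 e.
Proof. intros He. pose proof (sh0_pos e He). unfold g2p. field. nz. Qed.

Lemma Cs_exp e s : 0 < e < 1 -> Cs e s = ch0 e * cosh s + sh0 e * sinh s.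
Proof. intros. unfold Cs. rewrite cosh_plus, cosh_mu0, sinh_mu0 by auto. ring. Qed.
Lemma Ss_exp e s : 0 < e < 1 -> Ss e s = sh0 e * cosh s + ch0 e * sinh s.
Proof. intros. unfold Ss. rewrite sinh_plus, cosh_mu0, sinh_mu0 by auto. ring. Qed.

Lemma ctx e : 0 < e < 1 -> exists M, 0 < M /\ forall s eps, Rabs s <= eps -> eps <= 1 ->
  Rabs (Cs e s - ch0 e) <= M * eps /\ Rabs (Ss e s - sh0 e) <= M * eps /\
  Rabs (Cs e s) <= M /\ Rabs (Ss e s) <= M /\
  Rabs (Ss e s ^ 2 - sh0 e ^ 2 - kk e * s) <= M * eps ^ 2 /\
  Rabs (2 * Cs e s * Ss e s - kk e) <= M * eps.
Proof.
intros He. pose proof (sh0_pos e He) as Hsh. pose proof (ch0_pos e He) as Hch.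
set (K0 := 3 * (ch0 e + sh0 e)).
assert (HK0 : 0 < K0) by (unfold K0; lra).
exists (2 * K0 ^ 2 + 2 * (ch0 e + sh0 e) * K0 + K0). split. nra.
intros s eps Hs He1.
assert (Hs1 : Rabs s <= 1) by lra.
pose proof (Rabs_pos s) as Hsp.
pose proof (cosh_quad s Hs1) as Q1. pose proof (sinh_lin s Hs1) as Q2. pose proof (sinh_quad s Hs1) as Q3.
pose proof (cosh_le3 s Hs1) as Q4. pose proof (sinh_le3 s Hs1) as Q5.
assert (Hss : s ^ 2 <= Rabs s) by (rewrite <- (Rabs_right (s^2)) by nra; rewrite <- RPow_abs; simpl; nra).
assert (Hse : s ^ 2 <= eps ^ 2) by (rewrite <- (Rabs_right (s^2)) by nra; rewrite <- RPow_abs; simpl; nra).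
assert (A1 : Rabs (Cs e s - ch0 e) <= K0 * Rabs s).
{ rewrite Cs_exp by auto. replace (ch0 e * cosh s + sh0 e * sinh s - ch0 e) with (ch0 e * (cosh s - 1) + sh0 e * sinh s) by ring.
  eapply Rle_trans. apply Rabs_triang. rewrite !Rabs_mult, (Rabs_right (ch0 e)), (Rabs_right (sh0 e)) by lra. unfold K0. nra. }
assert (A2 : Rabs (Ss e s - sh0 e) <= K0 * Rabs s).
{ rewrite Ss_exp by auto. replace (sh0 e * cosh s + ch0 e * sinh s - sh0 e) with (sh0 e * (cosh s - 1) + ch0 e * sinh s) by ring.
  eapply Rle_trans. apply Rabs_triang. rewrite !Rabs_mult, (Rabs_right (ch0 e)), (Rabs_right (sh0 e)) by lra. unfold K0. nra. }
assert (A3 : Rabs (Cs e s) <= K0).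
{ rewrite Cs_exp by auto. eapply Rle_trans. apply Rabs_triang. rewrite !Rabs_mult, (Rabs_right (ch0 e)), (Rabs_right (sh0 e)) by lra. unfold K0. nra. }
assert (A4 : Rabs (Ss e s) <= K0).
{ rewrite Ss_exp by auto. eapply Rle_trans. apply Rabs_triang. rewrite !Rabs_mult, (Rabs_right (ch0 e)), (Rabs_right (sh0 e)) by lra. unfold K0. nra. }
assert (A5 : Rabs (Ss e s - sh0 e - ch0 e * s) <= K0 * s ^ 2).
{ rewrite Ss_exp by auto. replace (sh0 e * cosh s + ch0 e * sinh s - sh0 e - ch0 e * s) with (sh0 e * (cosh s - 1) + ch0 e * (sinh s - s)) by ring.
  eapply Rle_trans. apply Rabs_triang. rewrite !Rabs_mult, (Rabs_right (ch0 e)), (Rabs_right (sh0 e)) by lra. unfold K0. nra. }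
pose proof (Rabs_pos (Ss e s - sh0 e)).
pose proof (Rabs_pos (Cs e s - ch0 e)).
assert (HKs : K0 * Rabs s <= K0 * eps) by nra.
split; [|split; [|split; [|split; [|split]]]].
- nra.
- nra.
- nra.
- nra.
- replace (Ss e s ^ 2 - sh0 e ^ 2 - kk e * s) with ((Ss e s - sh0 e) ^ 2 + 2 * sh0 e * (Ss e s - sh0 e - ch0 e * s)) by (unfold kk; ring).
  eapply Rle_trans. apply Rabs_triang. rewrite Rabs_mult, <- RPow_abs, (Rabs_right (2 * sh0 e)) by lra.
  assert (Rabs (Ss e s - sh0 e) ^ 2 <= (K0 * Rabs s) ^ 2) by (apply pow_incr; lra).
  assert ((K0 * Rabs s) ^ 2 = K0 ^ 2 * s ^ 2) by (rewrite <- (Rabs_right K0) at 1 by lra; rewrite <- Rabs_mult, RPow_abs, Rabs_right; [ring| nra]).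
  assert (2 * sh0 e * Rabs (Ss e s - sh0 e - ch0 e * s) <= 2 * sh0 e * (K0 * s ^ 2)) by (apply Rmult_le_compat_l; lra).
  assert (0 <= ch0 e * K0) by nra.
  assert ((K0 ^ 2 + 2 * sh0 e * K0) * s ^ 2 <= (K0 ^ 2 + 2 * sh0 e * K0) * eps ^ 2) by (apply Rmult_le_compat_l; nra).
  assert (0 <= (K0 ^ 2 + 2 * ch0 e * K0 + K0) * eps ^ 2) by (apply Rmult_le_pos; nra).
  nra.
- replace (2 * Cs e s * Ss e s - kk e) with (2 * (Cs e s - ch0 e) * Ss e s + 2 * ch0 e * (Ss e s - sh0 e)) by (unfold kk; ring).
  eapply Rle_trans. apply Rabs_triang. rewrite !Rabs_mult, (Rabs_right 2), (Rabs_right (ch0 e)) by lra.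
  pose proof (Rabs_pos (Ss e s)).
  assert (Rabs (Cs e s - ch0 e) * Rabs (Ss e s) <= K0 * Rabs s * K0) by (apply Rmult_le_compat; lra).
  assert (ch0 e * Rabs (Ss e s - sh0 e) <= ch0 e * (K0 * Rabs s)) by (apply Rmult_le_compat_l; lra).
  assert (K0 * Rabs s * K0 <= K0 * eps * K0) by nra.
  assert (ch0 e * (K0 * Rabs s) <= ch0 e * (K0 * eps)) by nra.
  nra.
Qed.


Ltac close_bnd := eapply Rle_trans; [bnd|]; apply Req_le; ring.

Lemma atom_bounds e M s φ eps : 0 < e < 1 -> 0 < M ->
  Rabs (Cs e s - ch0 e) <= M * eps -> Rabs (Ss e s - sh0 e) <= M * eps ->
  Rabs (Cs e s) <= M -> Rabs (Ss e s) <= M ->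
  Rabs (g1 e s φ) <= M /\ Rabs (g2 e s φ) <= M * / sh0 e /\
  Rabs (g1s e s φ) <= M /\ Rabs (g2s e s φ) <= M * / sh0 e /\
  Rabs (g1p e s φ) <= M /\ Rabs (g2p e s φ) <= M * / sh0 e /\
  Rabs (g1 e s φ - cos φ) <= M * eps /\ Rabs (g2 e s φ - sin φ) <= M * eps * / sh0 e /\
  Rabs (g1p e s φ - - sin φ) <= M * eps /\ Rabs (g2p e s φ - cos φ) <= M * eps * / sh0 e /\
  Rabs (Dd e φ) <= 1 + / sh0 e ^ 2 /\ Rabs (Dp e φ) <= 2 * (/ sh0 e ^ 2 + 1).
Proof.
intros He HM H1 H2 H3 H4.
pose proof (sh0_pos e He) as Hsh.
assert (Hc : Rabs (cos φ) <= 1) by (apply Rabs_le; apply COS_bound).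
assert (Hs : Rabs (sin φ) <= 1) by (apply Rabs_le; apply SIN_bound).
assert (Hee : Rabs e <= 1) by (rewrite Rabs_right; lra).
assert (Hi : Rabs (/ sh0 e) <= / sh0 e) by (rewrite Rabs_right; [lra|left; apply Rinv_0_lt_compat; lra]).
assert (Hi2 : Rabs (/ sh0 e ^ 2) <= / sh0 e ^ 2) by (rewrite Rabs_right; [lra|left; apply Rinv_0_lt_compat; nra]).
assert (He2 : Rabs (e ^ 2) <= 1) by (rewrite Rabs_right; nra).
assert (Hr2 : Rabs 2 <= 2) by (rewrite Rabs_right; lra).
assert (0 < / sh0 e) by (apply Rinv_0_lt_compat; lra).
assert (0 < / sh0 e ^ 2) by (apply Rinv_0_lt_compat; nra).
assert (HM0 : 0 <= M) by lra.
split; [|split; [|split; [|split; [|split; [|split; [|split; [|split; [|split; [|split; [|split]]]]]]]]]].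
- unfold g1. close_bnd.
- unfold g2. close_bnd.
- unfold g1s. close_bnd.
- unfold g2s. close_bnd.
- unfold g1p. close_bnd.
- unfold g2p. close_bnd.
- rewrite g1_diff by auto. close_bnd.
- rewrite g2_diff by auto. close_bnd.
- rewrite g1p_diff by auto. close_bnd.
- rewrite g2p_diff by auto. close_bnd.
- unfold Dd. replace (sin φ ^ 2 / sh0 e ^ 2) with (sin φ ^ 2 * / sh0 e ^ 2) by reflexivity.
  eapply Rle_trans; [bnd|]. simpl. nra.
- unfold Dp. eapply Rle_trans; [bnd|]. nra.
Qed.

Lemma le1_mult eps X : 0 <= X -> eps <= 1 -> eps * X <= X.
Proof. intros. nra. Qed.

Ltac prep e M HC s eps φ :=
  let Hs := fresh in
  destruct (HC s eps) as [HdC [HdS [HCb [HSb [HH HCS]]]]]; auto;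
  destruct (atom_bounds e M s φ eps) as [Hg1 [Hg2 [Hg1s [Hg2s [Hg1p [Hg2p [Hd1 [Hd2 [Hd1p [Hd2p [HD HDp]]]]]]]]]]]; auto;
  assert (Hc : Rabs (cos φ) <= 1) by (apply Rabs_le; apply COS_bound);
  assert (Hsn : Rabs (sin φ) <= 1) by (apply Rabs_le; apply SIN_bound).

Lemma R1 e : 0 < e < 1 -> exists K, forall p q r w1 w2 s φ eps,
  Rabs s <= eps -> eps <= 1 -> Rabs p <= eps -> Rabs q <= eps -> Rabs r <= eps ->
  Rabs w1 <= eps -> Rabs w2 <= eps ->
  Rabs (FF e p q r w1 w2 s φ - (kk e * s * Dd e φ + Lf p q r w1 w2 φ)) <= K * eps ^ 2.
Proof.
intros He. destruct (ctx e He) as [M [HM HC]].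
eexists. intros p q r w1 w2 s φ eps Hs He1 Hp Hq Hr Hw1 Hw2.
prep e M HC s eps φ.
assert (E : FF e p q r w1 w2 s φ - (kk e * s * Dd e φ + Lf p q r w1 w2 φ) =
  (Ss e s ^ 2 - sh0 e ^ 2 - kk e * s) * Dd e φ
  + 2 * ((g1 e s φ - cos φ) * (p * g1 e s φ + q * g2 e s φ + w1)
         + cos φ * (p * (g1 e s φ - cos φ) + q * (g2 e s φ - sin φ))
         + (g2 e s φ - sin φ) * (q * g1 e s φ + r * g2 e s φ + w2)
         + sin φ * (q * (g1 e s φ - cos φ) + r * (g2 e s φ - sin φ)))
  + (p * g1 e s φ + q * g2 e s φ + w1) ^ 2 + (q * g1 e s φ + r * g2 e s φ + w2) ^ 2).
{ replace (FF e p q r w1 w2 s φ) with ((g1 e s φ ^ 2 + g2 e s φ ^ 2 - 1)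
     + 2 * (g1 e s φ * (p * g1 e s φ + q * g2 e s φ + w1) + g2 e s φ * (q * g1 e s φ + r * g2 e s φ + w2))
     + (p * g1 e s φ + q * g2 e s φ + w1) ^ 2 + (q * g1 e s φ + r * g2 e s φ + w2) ^ 2)
    by (unfold FF, X1, X2; ring).
  rewrite g_sq by auto. unfold Lf. ring. }
rewrite E. eapply Rle_trans; [bnd|]. finish_homog eps.
Qed.

Lemma R2 e : 0 < e < 1 -> exists K, forall p q r w1 w2 s φ eps,
  Rabs s <= eps -> eps <= 1 -> Rabs p <= eps -> Rabs q <= eps -> Rabs r <= eps ->
  Rabs w1 <= eps -> Rabs w2 <= eps ->
  Rabs (FFp e p q r w1 w2 s φ - (kk e * s * Dp e φ + Lp p q r w1 w2 φ)) <= K * eps ^ 2.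
Proof.
intros He. destruct (ctx e He) as [M [HM HC]].
eexists. intros p q r w1 w2 s φ eps Hs He1 Hp Hq Hr Hw1 Hw2.
prep e M HC s eps φ.
set (b1 := p * g1 e s φ + q * g2 e s φ + w1).
set (b2 := q * g1 e s φ + r * g2 e s φ + w2).
set (b1p := p * g1p e s φ + q * g2p e s φ).
set (b2p := q * g1p e s φ + r * g2p e s φ).
assert (E : FFp e p q r w1 w2 s φ - (kk e * s * Dp e φ + Lp p q r w1 w2 φ) =
  (Ss e s ^ 2 - sh0 e ^ 2 - kk e * s) * Dp e φ
  + 2 * ((g1 e s φ - cos φ) * b1p + cos φ * (p * (g1p e s φ - - sin φ) + q * (g2p e s φ - cos φ))
       + b1 * (g1p e s φ - - sin φ) + (- sin φ) * (p * (g1 e s φ - cos φ) + q * (g2 e s φ - sin φ))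
       + b1 * b1p
       + (g2 e s φ - sin φ) * b2p + sin φ * (q * (g1p e s φ - - sin φ) + r * (g2p e s φ - cos φ))
       + b2 * (g2p e s φ - cos φ) + cos φ * (q * (g1 e s φ - cos φ) + r * (g2 e s φ - sin φ))
       + b2 * b2p)).
{ replace (FFp e p q r w1 w2 s φ) with (2 * (g1 e s φ * g1p e s φ + g2 e s φ * g2p e s φ)
     + 2 * (g1 e s φ * b1p + b1 * g1p e s φ + b1 * b1p) + 2 * (g2 e s φ * b2p + b2 * g2p e s φ + b2 * b2p))
    by (unfold FFp, X1, X2, b1, b2, b1p, b2p; ring).
  rewrite g_dp by auto. unfold Lp, b1, b2, b1p, b2p. ring. }
rewrite E. unfold b1, b2, b1p, b2p. eapply Rle_trans; [bnd|]. finish_homog eps.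
Qed.

Lemma R3 e : 0 < e < 1 -> exists K, forall p q r w1 w2 s φ eps,
  Rabs s <= eps -> eps <= 1 -> Rabs p <= eps -> Rabs q <= eps -> Rabs r <= eps ->
  Rabs w1 <= eps -> Rabs w2 <= eps ->
  Rabs (FFs e p q r w1 w2 s φ - kk e * Dd e φ) <= K * eps.
Proof.
intros He. destruct (ctx e He) as [M [HM HC]].
pose proof (sh0_pos e He) as Hsh.
assert (0 < / sh0 e) by (apply Rinv_0_lt_compat; lra).
eexists. intros p q r w1 w2 s φ eps Hs He1 Hp Hq Hr Hw1 Hw2.
prep e M HC s eps φ.
assert (0 <= eps) by (pose proof (Rabs_pos p); lra).
assert (HX1 : Rabs (X1 e p q r w1 w2 s φ) <= 2 * M + 2 * (M * / sh0 e) + 1).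
{ unfold X1. eapply Rle_trans; [bnd|].
  assert (eps * M <= M) by nra. assert (eps * (M * / sh0 e) <= M * / sh0 e) by (apply le1_mult; [left; apply Rmult_lt_0_compat; auto; apply Rinv_0_lt_compat; lra|lra]). assert (0 <= M * / sh0 e) by (left; apply Rmult_lt_0_compat; auto). lra. }
assert (HX2 : Rabs (X2 e p q r w1 w2 s φ) <= 2 * M + 2 * (M * / sh0 e) + 1).
{ unfold X2. eapply Rle_trans; [bnd|].
  assert (eps * M <= M) by nra. assert (eps * (M * / sh0 e) <= M * / sh0 e) by (apply le1_mult; [left; apply Rmult_lt_0_compat; auto; apply Rinv_0_lt_compat; lra|lra]). assert (0 <= M * / sh0 e) by (left; apply Rmult_lt_0_compat; auto). lra. }
assert (E : FFs e p q r w1 w2 s φ - kk e * Dd e φ =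
  (2 * Cs e s * Ss e s - kk e) * Dd e φ
  + 2 * (X1 e p q r w1 w2 s φ * (p * g1s e s φ + q * g2s e s φ) + (p * g1 e s φ + q * g2 e s φ + w1) * g1s e s φ)
  + 2 * (X2 e p q r w1 w2 s φ * (q * g1s e s φ + r * g2s e s φ) + (q * g1 e s φ + r * g2 e s φ + w2) * g2s e s φ)).
{ replace (FFs e p q r w1 w2 s φ) with (2 * (g1 e s φ * g1s e s φ + g2 e s φ * g2s e s φ)
  + 2 * (X1 e p q r w1 w2 s φ * (p * g1s e s φ + q * g2s e s φ) + (p * g1 e s φ + q * g2 e s φ + w1) * g1s e s φ)
  + 2 * (X2 e p q r w1 w2 s φ * (q * g1s e s φ + r * g2s e s φ) + (q * g1 e s φ + r * g2 e s φ + w2) * g2s e s φ))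
    by (unfold FFs, X1, X2; ring).
  rewrite g_ds by auto. ring. }
rewrite E. eapply Rle_trans; [bnd|]. finish_homog eps.
Qed.


Lemma Out e : 0 < e < 1 -> forall p q r w1 w2 s φ eps,
  0 <= eps -> eps <= 1 -> Rabs p <= eps -> Rabs q <= eps -> Rabs r <= eps ->
  Rabs w1 <= eps -> Rabs w2 <= eps ->
  Rabs (FF e p q r w1 w2 s φ - (g1 e s φ ^ 2 + g2 e s φ ^ 2 - 1)) <=
    26 * eps * (g1 e s φ ^ 2 + g2 e s φ ^ 2 + 1).
Proof.
intros He p q r w1 w2 s φ eps He0 He1 Hp Hq Hr Hw1 Hw2.
set (G := sqrt (g1 e s φ ^ 2 + g2 e s φ ^ 2)).
assert (HG2 : G ^ 2 = g1 e s φ ^ 2 + g2 e s φ ^ 2) by (unfold G; rewrite pow2_sqrt; nra).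
assert (HG0 : 0 <= G) by apply sqrt_pos.
assert (Hg1 : Rabs (g1 e s φ) <= G).
{ rewrite <- (Rabs_right G) by lra. apply Rsqr_le_abs_0. unfold Rsqr. nra. }
assert (Hg2 : Rabs (g2 e s φ) <= G).
{ rewrite <- (Rabs_right G) by lra. apply Rsqr_le_abs_0. unfold Rsqr. nra. }
assert (Hr2 : Rabs 2 <= 2) by (rewrite Rabs_right; lra).
replace (FF e p q r w1 w2 s φ - (g1 e s φ ^ 2 + g2 e s φ ^ 2 - 1)) with
  (2 * (g1 e s φ * (p * g1 e s φ + q * g2 e s φ + w1) + g2 e s φ * (q * g1 e s φ + r * g2 e s φ + w2))
   + (p * g1 e s φ + q * g2 e s φ + w1) ^ 2 + (q * g1 e s φ + r * g2 e s φ + w2) ^ 2)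
  by (unfold FF, X1, X2; ring).
eapply Rle_trans; [bnd|]. rewrite <- HG2.
assert (eps ^ 2 <= eps) by nra.
assert (0 <= eps * G) by nra.
assert (0 <= eps * G * G) by nra.
assert (eps ^ 2 * G ^ 2 <= eps * G ^ 2) by (apply Rmult_le_compat_r; nra).
assert (eps ^ 2 * G <= eps * G) by (apply Rmult_le_compat_r; nra).
assert (0 <= eps * (G - 1) ^ 2) by (apply Rmult_le_pos; [lra | apply pow2_ge_0]).
assert (eps * G <= eps * (G ^ 2 + 1) / 2) by nra.
nra.
Qed.

Lemma Lbounds : exists KL, forall p q r w1 w2 φ eps,
  Rabs p <= eps -> Rabs q <= eps -> Rabs r <= eps -> Rabs w1 <= eps -> Rabs w2 <= eps ->
  Rabs (Lf p q r w1 w2 φ) <= KL * eps /\ Rabs (Lp p q r w1 w2 φ) <= KL * eps.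
Proof.
exists 24. intros p q r w1 w2 φ eps Hp Hq Hr Hw1 Hw2.
assert (Hc : Rabs (cos φ) <= 1) by (apply Rabs_le; apply COS_bound).
assert (Hsn : Rabs (sin φ) <= 1) by (apply Rabs_le; apply SIN_bound).
assert (Hr2 : Rabs 2 <= 2) by (rewrite Rabs_right; lra).
assert (0 <= eps) by (pose proof (Rabs_pos p); lra).
split.
- unfold Lf. eapply Rle_trans; [bnd|]. lra.
- unfold Lp. replace (- p * sin φ) with (- (p * sin φ)) by ring. replace (- q * sin φ) with (- (q * sin φ)) by ring.
  eapply Rle_trans; [bnd|]. lra.
Qed.

Lemma Dd_lower e φ : 0 < e < 1 -> Rmin (e ^ 2) (/ sh0 e ^ 2) <= Dd e φ.
Proof. intros He. pose proof (sh0_pos e He).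
  assert (0 < / sh0 e ^ 2) by (apply Rinv_0_lt_compat; nra).
  pose proof (sin2_cos2 φ). unfold Rsqr in H1. unfold Dd.
  pose proof (Rmin_l (e ^ 2) (/ sh0 e ^ 2)). pose proof (Rmin_r (e ^ 2) (/ sh0 e ^ 2)).
  replace (sin φ ^ 2 / sh0 e ^ 2) with (sin φ ^ 2 * / sh0 e ^ 2) by reflexivity.
  assert (Rmin (e ^ 2) (/ sh0 e ^ 2) * cos φ ^ 2 <= e ^ 2 * cos φ ^ 2) by (apply Rmult_le_compat_r; nra).
  assert (Rmin (e ^ 2) (/ sh0 e ^ 2) * sin φ ^ 2 <= sin φ ^ 2 * / sh0 e ^ 2) by (rewrite (Rmult_comm (sin φ ^ 2)); apply Rmult_le_compat_r; nra).
  nra. Qed.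

Lemma Dd_lower_pos e : 0 < e < 1 -> 0 < Rmin (e ^ 2) (/ sh0 e ^ 2).
Proof. intros He. pose proof (sh0_pos e He). apply Rmin_pos. nra. apply Rinv_0_lt_compat; nra. Qed.

Lemma h_up e s r0 : 0 < e < 1 -> 0 < r0 -> r0 <= s -> sinh (mu0 e + r0) ^ 2 <= Ss e s ^ 2.
Proof. intros He Hr Hs. pose proof (mu0_pos e He). unfold Ss.
  assert (0 < sinh (mu0 e + r0)) by (rewrite <- sinh_0; apply sinh_lt; lra).
  destruct (Req_dec s r0). subst; lra.
  assert (sinh (mu0 e + r0) < sinh (mu0 e + s)) by (apply sinh_lt; lra). nra. Qed.
Lemma h_down e s r0 : 0 < e < 1 -> 0 < r0 -> -mu0 e <= s -> s <= - r0 -> Ss e s ^ 2 <= sinh (mu0 e - r0) ^ 2.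
Proof. intros He Hr Hs1 Hs2. pose proof (mu0_pos e He). unfold Ss.
  assert (0 <= sinh (mu0 e + s)).
  { destruct (Req_dec (mu0 e + s) 0) as [E|E]. rewrite E, sinh_0; lra.
    left. rewrite <- sinh_0; apply sinh_lt; lra. }
  destruct (Req_dec s (-r0)). subst. replace (mu0 e + - r0) with (mu0 e - r0) by ring. lra.
  assert (sinh (mu0 e + s) < sinh (mu0 e - r0)) by (apply sinh_lt; lra). nra. Qed.
Lemma h_r0_pos e r0 : 0 < e < 1 -> 0 < r0 -> sh0 e ^ 2 < sinh (mu0 e + r0) ^ 2.
Proof. intros He Hr. pose proof (sh0_pos e He). rewrite <- (sinh_mu0 e He).
  assert (sinh (mu0 e) < sinh (mu0 e + r0)) by (apply sinh_lt; lra).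
  pose proof (mu0_pos e He). assert (0 < sinh (mu0 e)) by (rewrite sinh_mu0; auto). nra. Qed.
Lemma h_mr0_neg e r0 : 0 < e < 1 -> 0 < r0 -> r0 < mu0 e -> sinh (mu0 e - r0) ^ 2 < sh0 e ^ 2.
Proof. intros He Hr Hr2. rewrite <- (sinh_mu0 e He).
  assert (sinh (mu0 e - r0) < sinh (mu0 e)) by (apply sinh_lt; lra).
  assert (0 < sinh (mu0 e - r0)) by (rewrite <- sinh_0; apply sinh_lt; lra). nra. Qed.


Ltac posm := repeat apply Rmult_lt_0_compat; try lra; try nra.

Lemma Dd_upper e φ : 0 < e < 1 -> Dd e φ <= 1 + / sh0 e ^ 2.
Proof. intros He. pose proof (sh0_pos e He).
  assert (0 < / sh0 e ^ 2) by (apply Rinv_0_lt_compat; posm).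
  pose proof (sin2_cos2 φ). unfold Rsqr in H1. unfold Dd.
  replace (sin φ ^ 2 / sh0 e ^ 2) with (sin φ ^ 2 * / sh0 e ^ 2) by reflexivity.
  assert (e ^ 2 * cos φ ^ 2 <= 1) by nra.
  assert (sin φ ^ 2 * / sh0 e ^ 2 <= / sh0 e ^ 2) by nra. lra. Qed.
Lemma Dp_bound e φ : 0 < e < 1 -> Rabs (Dp e φ) <= 2 * (/ sh0 e ^ 2 + 1).
Proof. intros He. pose proof (sh0_pos e He).
  assert (0 < / sh0 e ^ 2) by (apply Rinv_0_lt_compat; posm).
  assert (Hc : Rabs (cos φ) <= 1) by (apply Rabs_le; apply COS_bound).
  assert (Hsn : Rabs (sin φ) <= 1) by (apply Rabs_le; apply SIN_bound).
  assert (Hr2 : Rabs 2 <= 2) by (rewrite Rabs_right; lra).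
  assert (Rabs (/ sh0 e ^ 2 - e ^ 2) <= / sh0 e ^ 2 + 1).
  { apply Rabs_le. split; nra. }
  unfold Dp. eapply Rle_trans; [bnd|]. lra. Qed.

Lemma quot_diff N0 E E' D0 m0 m : 0 < m0 -> m0 <= D0 -> 0 < m -> m <= D0 + E' ->
  Rabs (- (N0 + E) / (D0 + E') - - N0 / D0) <= (Rabs N0 * Rabs E' + Rabs E * D0) / (m * m0).
Proof.
intros H1 H2 H3 H4.
replace (- (N0 + E) / (D0 + E') - - N0 / D0) with ((N0 * E' - E * D0) / ((D0 + E') * D0)) by (field; nz).
unfold Rdiv. rewrite Rabs_mult, Rabs_inv, (Rabs_right ((D0 + E') * D0)) by nra.
apply Rmult_le_compat.
- apply Rabs_pos.
- left; apply Rinv_0_lt_compat; posm.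
- eapply Rle_trans; [apply Rabs_triang|]. rewrite Rabs_Ropp, !Rabs_mult, (Rabs_right D0) by lra. lra.
- apply Rinv_le_contravar. nra. apply Rmult_le_compat; lra.
Qed.

Lemma Rmax_abs_le x A B : Rabs x <= B -> A <= B -> Rmax (Rabs x) A <= B.
Proof. intros. apply Rmax_lub; auto. Qed.

Lemma pos_bound (K : R) (P : R -> R -> Prop) : exists K', 0 < K' /\ K <= K'.
Proof. exists (Rabs K + 1). split. pose proof (Rabs_pos K); lra. pose proof (Rle_abs K); lra. Qed.

Lemma main_nu e : 0 < e < 1 -> exists K d0', 0 < d0' /\ forall p q r w1 w2 A,
  0 <= A -> A <= d0' -> Rabs p <= A -> Rabs q <= A -> Rabs r <= A -> Rabs w1 <= A -> Rabs w2 <= A ->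
  exists nu : R -> R,
   (forall x, nu (x + 2 * PI) = nu x) /\ (forall x, ex_derive nu x) /\ (forall x, continuous (Derive nu) x) /\
   (forall φ, FF e p q r w1 w2 (nu φ) φ = 0) /\
   (forall φ s, - mu0 e <= s -> FF e p q r w1 w2 s φ = 0 -> s = nu φ) /\
   (forall φ, Rabs (nu φ - muL e p q r w1 w2 φ) <= K * A ^ 2) /\
   (forall φ, Rabs (Derive nu φ - muLp e p q r w1 w2 φ) <= K * A ^ 2).
Proof.
intros He.
destruct (R1 e He) as [K1 HR1]. destruct (R2 e He) as [K2 HR2]. destruct (R3 e He) as [K3 HR3].
destruct Lbounds as [KL HL].
destruct (pos_bound K1 (fun _ _ => True)) as [K1' [HK1 HK1']].
destruct (pos_bound K2 (fun _ _ => True)) as [K2' [HK2 HK2']].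
destruct (pos_bound K3 (fun _ _ => True)) as [K3' [HK3 HK3']].
destruct (pos_bound KL (fun _ _ => True)) as [KL' [HKL HKL']].
assert (HR1' : forall p q r w1 w2 s φ eps, Rabs s <= eps -> eps <= 1 -> Rabs p <= eps -> Rabs q <= eps -> Rabs r <= eps ->
  Rabs w1 <= eps -> Rabs w2 <= eps ->
  Rabs (FF e p q r w1 w2 s φ - (kk e * s * Dd e φ + Lf p q r w1 w2 φ)) <= K1' * eps ^ 2).
{ intros. eapply Rle_trans. apply HR1; eauto. apply Rmult_le_compat_r; auto. apply pow2_ge_0. }
assert (HR2' : forall p q r w1 w2 s φ eps, Rabs s <= eps -> eps <= 1 -> Rabs p <= eps -> Rabs q <= eps -> Rabs r <= eps ->
  Rabs w1 <= eps -> Rabs w2 <= eps ->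
  Rabs (FFp e p q r w1 w2 s φ - (kk e * s * Dp e φ + Lp p q r w1 w2 φ)) <= K2' * eps ^ 2).
{ intros. eapply Rle_trans. apply HR2; eauto. apply Rmult_le_compat_r; auto. apply pow2_ge_0. }
assert (HR3' : forall p q r w1 w2 s φ eps, Rabs s <= eps -> eps <= 1 -> Rabs p <= eps -> Rabs q <= eps -> Rabs r <= eps ->
  Rabs w1 <= eps -> Rabs w2 <= eps ->
  Rabs (FFs e p q r w1 w2 s φ - kk e * Dd e φ) <= K3' * eps).
{ intros. eapply Rle_trans. apply HR3; eauto. apply Rmult_le_compat_r; auto. pose proof (Rabs_pos s); lra. }
assert (HL' : forall p q r w1 w2 φ eps,
  Rabs p <= eps -> Rabs q <= eps -> Rabs r <= eps -> Rabs w1 <= eps -> Rabs w2 <= eps ->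
  Rabs (Lf p q r w1 w2 φ) <= KL' * eps /\ Rabs (Lp p q r w1 w2 φ) <= KL' * eps).
{ intros. assert (0 <= eps) by (pose proof (Rabs_pos p); lra). destruct (HL p q r w1 w2 φ eps) as [L1 L2]; auto.
  split; (eapply Rle_trans; [eauto|]; apply Rmult_le_compat_r; auto). }
clear HR1 HR2 HR3 HL.
pose proof (sh0_pos e He) as Hsh. pose proof (ch0_pos e He) as Hch. pose proof (mu0_pos e He) as Hmu.
set (k := kk e).
assert (Hk : 0 < k) by (unfold k, kk; nra).
set (d0 := Rmin (e ^ 2) (/ sh0 e ^ 2)).
assert (Hd0 : 0 < d0) by apply Dd_lower_pos, He.
assert (HDl : forall φ, d0 <= Dd e φ) by (intros; apply Dd_lower, He).
set (D1 := 1 + / sh0 e ^ 2).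
assert (HDu : forall φ, Dd e φ <= D1) by (intros; apply Dd_upper, He).
set (Dp1 := 2 * (/ sh0 e ^ 2 + 1)).
assert (HDp : forall φ, Rabs (Dp e φ) <= Dp1) by (intros; apply Dp_bound, He).
assert (HDp1 : 0 <= Dp1) by (unfold Dp1; assert (0 < / sh0 e ^ 2) by (apply Rinv_0_lt_compat; posm); lra).
set (m := k * d0 / 2).
assert (Hm : 0 < m) by (unfold m; nra).
set (r0 := Rmin (/ 2) (Rmin (mu0 e / 2) (k * d0 / (4 * (K1' + K3'))))).
assert (Hr0 : 0 < r0).
{ unfold r0. repeat apply Rmin_pos; try lra. apply Rdiv_lt_0_compat; nra. }
assert (Hr01 : r0 <= / 2) by apply Rmin_l.
assert (Hr02 : r0 <= mu0 e / 2) by (eapply Rle_trans; [apply Rmin_r|apply Rmin_l]).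
assert (Hr03 : r0 * (K1' + K3') <= k * d0 / 4).
{ assert (r0 <= k * d0 / (4 * (K1' + K3'))) by (eapply Rle_trans; [apply Rmin_r|apply Rmin_r]).
  apply (Rmult_le_compat_r (K1' + K3')) in H; [|lra]. replace (k * d0 / (4 * (K1' + K3')) * (K1' + K3')) with (k * d0 / 4) in H by (field; lra). lra. }
set (etap := (sinh (mu0 e + r0) ^ 2 - sh0 e ^ 2) * d0).
assert (Hetap : 0 < etap) by (unfold etap; pose proof (h_r0_pos e r0 He Hr0); nra).
set (etam := (sh0 e ^ 2 - sinh (mu0 e - r0) ^ 2) * d0).
assert (Hetam : 0 < etam) by (unfold etam; pose proof (h_mr0_neg e r0 He Hr0 ltac:(lra)); nra).
set (Kn := 2 * KL' / (k * d0) + 1).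
assert (HKn : 1 <= Kn) by (unfold Kn; assert (0 < 2 * KL' / (k * d0)) by (apply Rdiv_lt_0_compat; nra); lra).
set (KE0 := K1' * Kn ^ 2 / (k * d0)).
set (KE1 := ((KL' + Dp1 * KL' / d0) * (K3' * Kn) + (K2' * Kn ^ 2 + k * Dp1 * KE0) * (k * D1)) / (m * (k * d0))).
exists (KE0 + KE1).
exists (Rmin (/ Kn) (Rmin (etap / 208) (Rmin (etam / 104) (Rmin (/ 52) (k * d0 / (4 * K3')))))).
split.
{ repeat apply Rmin_pos; try lra. apply Rinv_0_lt_compat; lra. apply Rdiv_lt_0_compat; nra. }
intros p q r w1 w2 A HA0 HAd Hp Hq Hr Hw1 Hw2.
assert (HA1 : A <= / Kn) by (eapply Rle_trans; [exact HAd|apply Rmin_l]).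
assert (HA2 : A <= etap / 208) by (eapply Rle_trans; [exact HAd|]; eapply Rle_trans; [apply Rmin_r|apply Rmin_l]).
assert (HA3 : A <= etam / 104) by (eapply Rle_trans; [exact HAd|]; do 2 (eapply Rle_trans; [apply Rmin_r|]); apply Rmin_l).
assert (HA4 : A <= / 52) by (eapply Rle_trans; [exact HAd|]; do 3 (eapply Rle_trans; [apply Rmin_r|]); apply Rmin_l).
assert (HA5 : A <= k * d0 / (4 * K3')) by (eapply Rle_trans; [exact HAd|]; do 4 (eapply Rle_trans; [apply Rmin_r|]); apply Rle_refl).
clear HAd.
assert (HKnA : Kn * A <= 1).
{ apply (Rmult_le_compat_l Kn) in HA1; [|lra]. rewrite Rinv_r in HA1 by lra. lra. }
assert (HA51 : K3' * A <= k * d0 / 4).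
{ apply (Rmult_le_compat_l K3') in HA5; [|lra]. replace (K3' * (k * d0 / (4 * K3'))) with (k * d0 / 4) in HA5 by (field; lra). lra. }
set (F := FF e p q r w1 w2).
assert (HOut : forall s φ, Rabs (F s φ - (g1 e s φ ^ 2 + g2 e s φ ^ 2 - 1)) <= 26 * A * (g1 e s φ ^ 2 + g2 e s φ ^ 2 + 1)).
{ intros; apply Out; auto; lra. }
assert (Hbig : forall φ s, r0 <= s -> 0 < F s φ).
{ intros φ s Hs. specialize (HOut s φ).
  assert (EX : g1 e s φ ^ 2 + g2 e s φ ^ 2 - 1 = (Ss e s ^ 2 - sh0 e ^ 2) * Dd e φ) by (apply g_sq; auto).
  set (X := g1 e s φ ^ 2 + g2 e s φ ^ 2 - 1) in *.
  assert (HX : etap <= X).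
  { rewrite EX. unfold etap. pose proof (h_up e s r0 He Hr0 Hs). pose proof (h_r0_pos e r0 He Hr0).
    specialize (HDl φ). apply Rmult_le_compat; nra. }
  replace (g1 e s φ ^ 2 + g2 e s φ ^ 2 + 1) with (X + 2) in HOut by (unfold X; ring).
  apply Rabs_le_between in HOut. destruct HOut as [HO1 HO2].
  assert (26 * A * X <= X / 2) by nra. nra. }
assert (Hsmall : forall φ s, - mu0 e <= s -> s <= - r0 -> F s φ < 0).
{ intros φ s Hs1 Hs2. specialize (HOut s φ).
  assert (EX : g1 e s φ ^ 2 + g2 e s φ ^ 2 - 1 = (Ss e s ^ 2 - sh0 e ^ 2) * Dd e φ) by (apply g_sq; auto).
  assert (HX0 : -1 <= g1 e s φ ^ 2 + g2 e s φ ^ 2 - 1) by nra.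
  set (X := g1 e s φ ^ 2 + g2 e s φ ^ 2 - 1) in *.
  assert (HX : X <= - etam).
  { rewrite EX. unfold etam. pose proof (h_down e s r0 He Hr0 Hs1 Hs2). pose proof (h_mr0_neg e r0 He Hr0 ltac:(lra)).
    specialize (HDl φ).
    assert ((sh0 e ^ 2 - sinh (mu0 e - r0) ^ 2) * d0 <= (sh0 e ^ 2 - Ss e s ^ 2) * Dd e φ) by (apply Rmult_le_compat; nra).
    nra. }
  replace (g1 e s φ ^ 2 + g2 e s φ ^ 2 + 1) with (X + 2) in HOut by (unfold X; ring).
  apply Rabs_le_between in HOut. destruct HOut as [HO1 HO2].
  assert (26 * A * (X + 2) <= 52 * A) by nra. nra. }
assert (HFs : forall s φ, - r0 <= s <= r0 -> m <= FFs e p q r w1 w2 s φ).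
{ intros s φ Hs.
  assert (Hse : Rabs s <= Rmax (Rabs s) A) by apply Rmax_l.
  assert (HAe : A <= Rmax (Rabs s) A) by apply Rmax_r.
  assert (He1 : Rmax (Rabs s) A <= r0 + A) by (apply Rmax_lub; [apply Rabs_le; lra|lra]).
  pose proof (HR3' p q r w1 w2 s φ (Rmax (Rabs s) A) Hse ltac:(lra) ltac:(lra) ltac:(lra) ltac:(lra) ltac:(lra) ltac:(lra)) as H3.
  apply Rabs_le_between in H3. specialize (HDl φ).
  assert (K3' * Rmax (Rabs s) A <= K3' * (r0 + A)) by (apply Rmult_le_compat_l; lra).
  assert (k * d0 <= k * Dd e φ) by (apply Rmult_le_compat_l; lra).
  fold k in H3. unfold m. nra. }
destruct (implicit F (FFs e p q r w1 w2) (FFp e p q r w1 w2) r0 m) as [nu [Hroot [Huniq [Hper [Hder Hcont]]]]]; auto.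
{ intros φ. apply Hsmall; lra. }
{ intros φ. apply Hbig; lra. }
{ intros; apply FF_ds; auto. }
{ intros; apply FF_dp; auto. }
{ intros; apply FFs_cont. }
{ intros; apply FFp_cont. }
{ intros; apply FF_per. }
assert (Hnub : forall φ, Rabs (nu φ) <= Kn * A).
{ intros φ. destruct (Hroot φ) as [Hn0 HF0].
  set (v := nu φ) in *.
  destruct (Rle_dec (Rabs v) A) as [Hle|Hgt].
  - assert (A <= Kn * A) by nra. lra.
  - assert (Hv1 : Rabs v <= 1) by (apply Rabs_le; lra).
    pose proof (HR1' p q r w1 w2 v φ (Rabs v) (Rle_refl _) Hv1 ltac:(lra) ltac:(lra) ltac:(lra) ltac:(lra) ltac:(lra)) as H1.
    unfold F in HF0. rewrite HF0, Rminus_0_l, Rabs_Ropp in H1. fold k in H1.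
    destruct (HL' p q r w1 w2 φ A) as [HLf _]; auto.
    assert (Hv2 : Rabs v ^ 2 <= r0 * Rabs v) by (simpl; rewrite Rmult_1_r; apply Rmult_le_compat_r; [apply Rabs_pos|apply Rabs_le; lra]).
    assert (Hvv : v ^ 2 = Rabs v ^ 2) by (rewrite RPow_abs, Rabs_right; [ring|nra]).
    assert (H2 : Rabs (k * v * Dd e φ) <= K1' * Rabs v ^ 2 + KL' * A).
    { replace (k * v * Dd e φ) with ((k * v * Dd e φ + Lf p q r w1 w2 φ) - Lf p q r w1 w2 φ) by ring.
      eapply Rle_trans; [apply Rabs_triang|]. rewrite Rabs_Ropp. lra. }
    rewrite !Rabs_mult, (Rabs_right k), (Rabs_right (Dd e φ)) in H2 by (specialize (HDl φ); lra).
    specialize (HDl φ).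
    assert (k * Rabs v * d0 <= k * Rabs v * Dd e φ) by (apply Rmult_le_compat_l; [pose proof (Rabs_pos v); nra|lra]).
    assert (K1' * Rabs v ^ 2 <= K1' * r0 * Rabs v) by nra.
    assert (K1' * r0 <= k * d0 / 4) by nra.
    assert (K1' * r0 * Rabs v <= k * d0 / 4 * Rabs v) by (apply Rmult_le_compat_r; [apply Rabs_pos|lra]).
    assert (Hkv : k * d0 * Rabs v <= 2 * KL' * A) by nra.
    unfold Kn.
    assert (Rabs v <= 2 * KL' * A / (k * d0)).
    { apply (Rmult_le_reg_l (k * d0)); [nra|]. field_simplify; [lra|nra]. }
    assert (2 * KL' * A / (k * d0) = 2 * KL' / (k * d0) * A) by (field; nra).
    nra. }
assert (HnuA : forall φ, Rabs (nu φ) <= Kn * A /\ Kn * A <= 1 /\ Rabs p <= Kn * A /\ Rabs q <= Kn * A /\ Rabs r <= Kn * A /\ Rabs w1 <= Kn * A /\ Rabs w2 <= Kn * A).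
{ intros φ. assert (A <= Kn * A) by (rewrite <- (Rmult_1_l A) at 1; apply Rmult_le_compat_r; lra). split; [auto|]. repeat split; lra. }
assert (HE0 : forall φ, Rabs (nu φ - muL e p q r w1 w2 φ) <= KE0 * A ^ 2).
{ intros φ. destruct (HnuA φ) as [B1 [B2 [B3 [B4 [B5 [B6 B7]]]]]].
  pose proof (HR1' p q r w1 w2 (nu φ) φ (Kn * A) B1 B2 B3 B4 B5 B6 B7) as H1.
  destruct (Hroot φ) as [_ HF0]. unfold F in HF0. rewrite HF0, Rminus_0_l, Rabs_Ropp in H1. fold k in H1.
  specialize (HDl φ).
  replace (nu φ - muL e p q r w1 w2 φ) with ((k * nu φ * Dd e φ + Lf p q r w1 w2 φ) / (k * Dd e φ)).
  2:{ unfold muL. fold k. field. nz. }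
  unfold Rdiv. rewrite Rabs_mult, Rabs_inv, (Rabs_right (k * Dd e φ)) by nra.
  unfold KE0. 
  assert (/ (k * Dd e φ) <= / (k * d0)) by (apply Rinv_le_contravar; nra).
  assert (0 < / (k * d0)) by (apply Rinv_0_lt_compat; posm).
  replace (K1' * Kn ^ 2 / (k * d0) * A ^ 2) with (K1' * (Kn * A) ^ 2 * / (k * d0)) by (field; nra).
  apply Rmult_le_compat; auto. apply Rabs_pos. left; apply Rinv_0_lt_compat; posm. }
assert (HKE0 : 0 <= KE0).
{ unfold KE0. apply Rmult_le_pos. apply Rmult_le_pos; [lra|apply pow2_ge_0]. left; apply Rinv_0_lt_compat; posm. }
assert (Hid : 0 < / d0) by (apply Rinv_0_lt_compat; lra).
assert (HKE1 : 0 <= KE1).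
{ unfold KE1. apply Rmult_le_pos; [|left; apply Rinv_0_lt_compat; posm].
  apply Rplus_le_le_0_compat; apply Rmult_le_pos.
  - apply Rplus_le_le_0_compat; [lra|]. unfold Rdiv. apply Rmult_le_pos; [nra|lra].
  - nra.
  - apply Rplus_le_le_0_compat. apply Rmult_le_pos; [lra|apply pow2_ge_0]. apply Rmult_le_pos; nra.
  - unfold D1. assert (0 < / sh0 e ^ 2) by (apply Rinv_0_lt_compat; posm). nra. }
assert (HE1 : forall φ, Rabs (- FFp e p q r w1 w2 (nu φ) φ / FFs e p q r w1 w2 (nu φ) φ - muLp e p q r w1 w2 φ) <= KE1 * A ^ 2).
{ intros φ. destruct (HnuA φ) as [B1 [B2 [B3 [B4 [B5 [B6 B7]]]]]].
  destruct (Hroot φ) as [Hv HF0].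
  set (v := nu φ) in *.
  assert (HFsv : m <= FFs e p q r w1 w2 v φ) by (apply HFs; lra).
  specialize (HDl φ). specialize (HDu φ). specialize (HDp φ).
  set (N0 := Lp p q r w1 w2 φ + k * Dp e φ * muL e p q r w1 w2 φ).
  set (E := FFp e p q r w1 w2 v φ - N0).
  set (E' := FFs e p q r w1 w2 v φ - k * Dd e φ).
  replace (- FFp e p q r w1 w2 v φ / FFs e p q r w1 w2 v φ - muLp e p q r w1 w2 φ)
    with (- (N0 + E) / (k * Dd e φ + E') - - N0 / (k * Dd e φ)).
  2:{ unfold E, E', muLp. fold k. fold N0. field. nz. }
  eapply Rle_trans. apply (quot_diff N0 E E' (k * Dd e φ) (k * d0) m); try nra.
  { unfold E'. lra. }
  destruct (HL' p q r w1 w2 φ A) as [HLf HLp]; auto.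
  assert (HmuL : Rabs (muL e p q r w1 w2 φ) <= KL' * A / (k * d0)).
  { unfold muL. fold k. unfold Rdiv. rewrite Rabs_mult, Rabs_Ropp, Rabs_inv, (Rabs_right (k * Dd e φ)) by nra.
    apply Rmult_le_compat; auto. apply Rabs_pos. left; apply Rinv_0_lt_compat; posm.
    apply Rinv_le_contravar; nra. }
  assert (HN0 : Rabs N0 <= (KL' + Dp1 * KL' / d0) * A).
  { unfold N0. eapply Rle_trans; [apply Rabs_triang|]. rewrite !Rabs_mult, (Rabs_right k) by lra.
    assert (Rabs (Dp e φ) * Rabs (muL e p q r w1 w2 φ) <= Dp1 * (KL' * A / (k * d0))) by (apply Rmult_le_compat; auto using Rabs_pos).
    assert (k * (Dp1 * (KL' * A / (k * d0))) = Dp1 * KL' / d0 * A) by (field; nz).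
    nra. }
  assert (HE' : Rabs E' <= K3' * (Kn * A)).
  { unfold E'. apply HR3'; auto. }
  assert (HE : Rabs E <= (K2' * Kn ^ 2 + k * Dp1 * KE0) * A ^ 2).
  { replace E with ((FFp e p q r w1 w2 v φ - (kk e * v * Dp e φ + Lp p q r w1 w2 φ)) + k * Dp e φ * (v - muL e p q r w1 w2 φ))
      by (unfold E, N0; fold k; ring).
    eapply Rle_trans; [apply Rabs_triang|].
    pose proof (HR2' p q r w1 w2 v φ (Kn * A) B1 B2 B3 B4 B5 B6 B7) as H2.
    rewrite !Rabs_mult, (Rabs_right k) by lra.
    specialize (HE0 φ). fold v in HE0.
    assert (Rabs (Dp e φ) * Rabs (v - muL e p q r w1 w2 φ) <= Dp1 * (KE0 * A ^ 2)) by (apply Rmult_le_compat; auto using Rabs_pos).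
    assert (k * (Rabs (Dp e φ) * Rabs (v - muL e p q r w1 w2 φ)) <= k * (Dp1 * (KE0 * A ^ 2))) by (apply Rmult_le_compat_l; lra).
    replace ((K2' * Kn ^ 2 + k * Dp1 * KE0) * A ^ 2) with (K2' * (Kn * A) ^ 2 + k * (Dp1 * (KE0 * A ^ 2))) by ring.
    lra. }
  unfold KE1.
  assert (Hnum : Rabs N0 * Rabs E' + Rabs E * (k * Dd e φ) <=
     ((KL' + Dp1 * KL' / d0) * (K3' * Kn) + (K2' * Kn ^ 2 + k * Dp1 * KE0) * (k * D1)) * A ^ 2).
  { assert (0 <= (KL' + Dp1 * KL' / d0)) by (apply Rplus_le_le_0_compat; [lra|]; unfold Rdiv; apply Rmult_le_pos; nra).
    assert (Rabs N0 * Rabs E' <= (KL' + Dp1 * KL' / d0) * A * (K3' * (Kn * A))) by (apply Rmult_le_compat; auto using Rabs_pos).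
    assert (Rabs E * (k * Dd e φ) <= (K2' * Kn ^ 2 + k * Dp1 * KE0) * A ^ 2 * (k * D1)) by (apply Rmult_le_compat; auto using Rabs_pos; nra).
    replace (((KL' + Dp1 * KL' / d0) * (K3' * Kn) + (K2' * Kn ^ 2 + k * Dp1 * KE0) * (k * D1)) * A ^ 2)
      with ((KL' + Dp1 * KL' / d0) * A * (K3' * (Kn * A)) + (K2' * Kn ^ 2 + k * Dp1 * KE0) * A ^ 2 * (k * D1)) by ring.
    lra. }
  unfold Rdiv. replace (((KL' + Dp1 * KL' * / d0) * (K3' * Kn) + (K2' * Kn ^ 2 + k * Dp1 * KE0) * (k * D1)) * / (m * (k * d0)) * A ^ 2)
    with ((((KL' + Dp1 * KL' * / d0) * (K3' * Kn) + (K2' * Kn ^ 2 + k * Dp1 * KE0) * (k * D1)) * A ^ 2) * / (m * (k * d0))) by ring.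
  apply Rmult_le_compat_r; [left; apply Rinv_0_lt_compat; posm|]. exact Hnum. }
exists nu. split; [|split; [|split; [|split; [|split; [|split]]]]].
- exact Hper.
- intros x. eexists; apply Hder.
- intros x. apply (continuous_ext (fun φ => - FFp e p q r w1 w2 (nu φ) φ / FFs e p q r w1 w2 (nu φ) φ)).
  + intros y. symmetry. apply is_derive_unique, Hder.
  + apply Hcont.
- intros φ. apply Hroot.
- intros φ s Hs HF. destruct (Rle_dec r0 s) as [H1|H1].
  + specialize (Hbig φ s H1). unfold F in *. lra.
  + destruct (Rle_dec s (- r0)) as [H2|H2].
    * specialize (Hsmall φ s Hs H2). unfold F in *. lra.
    * apply Huniq; auto. lra.
- intros φ. eapply Rle_trans; [apply HE0|]. apply Rmult_le_compat_r; [apply pow2_ge_0|lra].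
- intros φ. rewrite (is_derive_unique _ _ _ (Hder φ)). eapply Rle_trans; [apply HE1|]. apply Rmult_le_compat_r; [apply pow2_ge_0|lra].
Qed.


Lemma unit_circle u w : u ^ 2 + w ^ 2 = 1 -> exists t, cos t = u /\ sin t = w.
Proof.
intros H.
assert (Hu : -1 <= u <= 1) by (split; nra).
assert (Hs : sqrt (1 - u²) = Rabs w).
{ rewrite <- sqrt_Rsqr_abs. f_equal. unfold Rsqr. nra. }
destruct (Rle_dec 0 w) as [Hw|Hw].
- exists (acos u). split. apply cos_acos; auto. rewrite sin_acos by auto. rewrite Hs, Rabs_right; lra.
- exists (- acos u). split. rewrite cos_neg. apply cos_acos; auto.
  rewrite sin_neg, sin_acos by auto. rewrite Hs, Rabs_left; lra.
Qed.

Lemma cosh_sqrt x : cosh x = sqrt (1 + sinh x ^ 2).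
Proof. rewrite <- cosh_sq. rewrite sqrt_pow2; auto. left; apply cosh_pos. Qed.

Lemma ell_coords c x y : 0 < c -> exists mu phi, 0 <= mu /\
  x = c * cosh mu * cos phi /\ y = c * sinh mu * sin phi.
Proof.
intros Hc.
set (b := c ^ 2 - x ^ 2 - y ^ 2).
set (sq := sqrt (b ^ 2 + 4 * c ^ 2 * y ^ 2)).
assert (Hsq2 : sq ^ 2 = b ^ 2 + 4 * c ^ 2 * y ^ 2) by (unfold sq; rewrite pow2_sqrt; nra).
assert (Hsq0 : 0 <= sq) by apply sqrt_pos.
assert (Hsqb : b <= sq) by nra.
set (Z := (sq - b) / (2 * c ^ 2)).
assert (HZ0 : 0 <= Z) by (unfold Z; apply Rmult_le_pos; [lra|left; apply Rinv_0_lt_compat; nra]).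
assert (HZq : c ^ 2 * Z ^ 2 + b * Z - y ^ 2 = 0).
{ unfold Z. replace (c ^ 2 * ((sq - b) / (2 * c ^ 2)) ^ 2 + b * ((sq - b) / (2 * c ^ 2)) - y ^ 2)
    with ((sq ^ 2 - b ^ 2 - 4 * c ^ 2 * y ^ 2) / (4 * c ^ 2)) by (field; nz).
  rewrite Hsq2. unfold Rdiv. ring. }
set (mu := arcsinh (sqrt Z)).
assert (Hsh : sinh mu = sqrt Z) by apply sinh_arcsinh.
assert (Hch : cosh mu = sqrt (1 + Z)) by (rewrite cosh_sqrt, Hsh, pow2_sqrt; auto).
assert (Hmu : 0 <= mu) by (rewrite <- arcsinh_0; apply arcsinh_le, sqrt_pos).
destruct (Req_dec Z 0) as [HZ|HZ].
- assert (Hy : y = 0) by (rewrite HZ in HZq; nra).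
  assert (Hb : 0 <= b) by (assert (sq = b) by (unfold Z in HZ; apply (Rmult_eq_reg_r (/ (2 * c ^ 2))); [lra|]; apply Rinv_neq_0_compat; nra); lra).
  assert (Hx : -1 <= x / c <= 1).
  { unfold b in Hb. rewrite Hy in Hb. split; apply (Rmult_le_reg_r c); auto; field_simplify; nra. }
  exists mu, (acos (x / c)). split; auto.
  rewrite Hch, Hsh, HZ, Rplus_0_r, sqrt_1, sqrt_0, cos_acos by auto. split. field. lra. rewrite Hy. ring.
- assert (HZp : 0 < Z) by lra.
  assert (Hs1 : 0 < sqrt (1 + Z)) by (apply sqrt_lt_R0; lra).
  assert (Hs2 : 0 < sqrt Z) by (apply sqrt_lt_R0; lra).
  destruct (unit_circle (x / (c * sqrt (1 + Z))) (y / (c * sqrt Z))) as [phi [Hcp Hsp]].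
  { unfold Rdiv. rewrite !Rpow_mult_distr, !pow_inv, !Rpow_mult_distr, !pow2_sqrt by lra.
    replace (x ^ 2 * / (c ^ 2 * (1 + Z)) + y ^ 2 * / (c ^ 2 * Z)) with ((x ^ 2 * Z + y ^ 2 * (1 + Z)) / (c ^ 2 * (1 + Z) * Z)) by (field; nz).
    replace (x ^ 2 * Z + y ^ 2 * (1 + Z)) with (c ^ 2 * (1 + Z) * Z) by (unfold b in HZq; nra).
    field. nz. }
  exists mu, phi. split; auto. rewrite Hch, Hsh, Hcp, Hsp. split; field; nz.
Qed.

Lemma sup_le (f : R -> R) B : (forall x, Rabs (f x) <= B) -> Rbar_le (sup_abs f) (Finite B).
Proof. intros H. unfold sup_abs. destruct (Lub_Rbar_correct (fun y => exists x, y = Rabs (f x))) as [_ Hl].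
  apply Hl. intros y [x ->]. simpl. apply H. Qed.
Lemma sup_ge (f : R -> R) x : Rbar_le (Finite (Rabs (f x))) (sup_abs f).
Proof. unfold sup_abs. destruct (Lub_Rbar_correct (fun y => exists x, y = Rabs (f x))) as [Hu _].
  apply Hu. exists x; reflexivity. Qed.

Definition mu1f e a0 a1 b1 a2 b2 := fun phi => a0 * e_h e phi + a1 * e_tau1 e phi
                 + b1 * e_tau2 e phi + a2 * e_hr e phi + b2 * e_r e phi.

Lemma mu1_lower e a0 a1 b1 a2 b2 M : 0 < e < 1 ->
  (forall phi, Rabs (mu1f e a0 a1 b1 a2 b2 phi) <= M) ->
  Rabs a0 <= 2 * M /\ Rabs a1 <= 2 * M /\ Rabs b1 <= 2 * M /\ Rabs a2 <= 2 * M /\ Rabs b2 <= 2 * M.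
Proof.
intros He H.
assert (HT : forall phi, Rabs (a0 + a1 * cos phi + b1 * sin phi + a2 * (cos phi ^ 2 - sin phi ^ 2) + b2 * (2 * sin phi * cos phi)) <= M).
{ intros phi. specialize (H phi). unfold mu1f, e_tau1, e_tau2, e_hr, e_r in H. unfold e_h in H. cbv beta in H.
  rewrite cos_2a, sin_2a in H.
  assert (Hc : cos phi ^ 2 <= 1) by (pose proof (COS_bound phi); nra).
  assert (Hd : 0 < 1 - e ^ 2 * cos phi ^ 2) by nra.
  set (N := a0 + a1 * cos phi + b1 * sin phi + a2 * (cos phi ^ 2 - sin phi ^ 2) + b2 * (2 * sin phi * cos phi)).
  replace (a0 * / (1 - e ^ 2 * cos phi ^ 2) + a1 * (cos phi * / (1 - e ^ 2 * cos phi ^ 2)) +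
       b1 * (sin phi * / (1 - e ^ 2 * cos phi ^ 2)) +
       a2 * ((cos phi * cos phi - sin phi * sin phi) * / (1 - e ^ 2 * cos phi ^ 2)) +
       b2 * (2 * sin phi * cos phi * / (1 - e ^ 2 * cos phi ^ 2))) with (N / (1 - e ^ 2 * cos phi ^ 2)) in H
    by (unfold N; field; nz).
  unfold Rdiv in H. rewrite Rabs_mult, Rabs_inv, (Rabs_right (1 - e ^ 2 * cos phi ^ 2)) in H by lra.
  assert (1 <= / (1 - e ^ 2 * cos phi ^ 2)).
  { rewrite <- Rinv_1. apply Rinv_le_contravar; nra. }
  pose proof (Rabs_pos N). nra. }
pose proof (HT 0) as T0. pose proof (HT PI) as T1. pose proof (HT (PI / 2)) as T2. pose proof (HT (- (PI / 2))) as T3.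
pose proof (HT (PI / 4)) as T4. pose proof (HT (PI / 4 + PI)) as T5.
rewrite cos_0, sin_0 in T0. rewrite cos_PI, sin_PI in T1. rewrite cos_PI2, sin_PI2 in T2.
rewrite cos_neg, sin_neg, cos_PI2, sin_PI2 in T3. rewrite neg_cos, neg_sin in T5.
rewrite sin_cos_PI4 in T4, T5.
assert (Hk : 2 * cos (PI / 4) ^ 2 = 1).
{ rewrite cos_PI4. unfold Rdiv. rewrite Rmult_1_l, pow_inv, pow2_sqrt by lra. field. }
replace (a0 + a1 * cos (PI / 4) + b1 * cos (PI / 4) + a2 * (cos (PI / 4) ^ 2 - cos (PI / 4) ^ 2) +
      b2 * (2 * cos (PI / 4) * cos (PI / 4))) with (a0 + (a1 + b1) * cos (PI / 4) + b2 * (2 * cos (PI / 4) ^ 2)) in T4 by ring.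
replace (a0 + a1 * - cos (PI / 4) + b1 * - cos (PI / 4) + a2 * ((- cos (PI / 4)) ^ 2 - (- cos (PI / 4)) ^ 2) +
      b2 * (2 * - cos (PI / 4) * - cos (PI / 4))) with (a0 - (a1 + b1) * cos (PI / 4) + b2 * (2 * cos (PI / 4) ^ 2)) in T5 by ring.
rewrite Hk in T4, T5.
apply Rabs_le_between in T0, T1, T2, T3, T4, T5.
repeat split; apply Rabs_le; nra.
Qed.

Definition TT e := sh0 e * e.

Lemma mu1_eq_muL e a0 a1 b1 a2 b2 phi : 0 < e < 1 ->
  mu1f e a0 a1 b1 a2 b2 phi =
  muL e (- (a0 + a2) / TT e) (- b2 / TT e) (- (a0 - a2) / TT e) (- a1 / TT e) (- b1 / TT e) phi.
Proof.
intros He. pose proof (sh0_pos e He) as Hsh.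
assert (Hcs : cos phi ^ 2 + sin phi ^ 2 = 1) by (pose proof (sin2_cos2 phi); unfold Rsqr in H; nra).
assert (Hc : cos phi ^ 2 <= 1) by (pose proof (COS_bound phi); nra).
assert (Hd : 0 < 1 - e ^ 2 * cos phi ^ 2) by nra.
set (N := a0 + a1 * cos phi + b1 * sin phi + a2 * (cos phi ^ 2 - sin phi ^ 2) + b2 * (2 * sin phi * cos phi)).
assert (E1 : mu1f e a0 a1 b1 a2 b2 phi = N / (1 - e ^ 2 * cos phi ^ 2)).
{ unfold mu1f, e_tau1, e_tau2, e_hr, e_r. unfold e_h. cbv beta. rewrite cos_2a, sin_2a. unfold N. field. nz. }
assert (E2 : Lf (- (a0 + a2) / TT e) (- b2 / TT e) (- (a0 - a2) / TT e) (- a1 / TT e) (- b1 / TT e) phi = - 2 * N / TT e).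
{ unfold Lf, N, TT.
  replace (a0 + a1 * cos phi + b1 * sin phi + a2 * (cos phi ^ 2 - sin phi ^ 2) + b2 * (2 * sin phi * cos phi))
    with (a0 * (cos phi ^ 2 + sin phi ^ 2) + a1 * cos phi + b1 * sin phi + a2 * (cos phi ^ 2 - sin phi ^ 2) + b2 * (2 * sin phi * cos phi))
    by (rewrite Hcs; ring).
  field. nz. }
assert (E3 : TT e * kk e * Dd e phi = 2 * (1 - e ^ 2 * cos phi ^ 2)).
{ transitivity (2 * (sh0 e ^ 2 * e ^ 2 * cos phi ^ 2 + sin phi ^ 2)).
  - unfold TT, kk, Dd, ch0. field. nz.
  - rewrite sh0_sq by auto. replace (sin phi ^ 2) with (1 - cos phi ^ 2) by lra. field. nz. }
rewrite E1. unfold muL. rewrite E2.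
assert (0 < TT e) by (unfold TT; nra).
assert (kk e * Dd e phi = 2 * (1 - e ^ 2 * cos phi ^ 2) / TT e) by (rewrite <- E3; field; nz).
rewrite H0. field. nz.
Qed.

Lemma muL_deriv e p q r w1 w2 phi : 0 < e < 1 ->
  is_derive (muL e p q r w1 w2) phi (muLp e p q r w1 w2 phi).
Proof.
intros He. pose proof (sh0_pos e He) as Hsh. pose proof (ch0_pos e He) as Hch.
assert (HD : 0 < Dd e phi) by (eapply Rlt_le_trans; [apply (Dd_lower_pos e He)|apply Dd_lower; auto]).
assert (Hk : 0 < kk e) by (unfold kk; nra).
assert (HkD : kk e * Dd e phi <> 0) by nz.
unfold Dd in HD, HkD. unfold kk in Hk, HkD.
assert (E : e * (e * 1) * (cos phi * (cos phi * 1)) + sin phi * (sin phi * 1) * / (sh0 e * (sh0 e * 1))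
   = e ^ 2 * cos phi ^ 2 + sin phi ^ 2 / sh0 e ^ 2) by (field; nz).
unfold muLp, muL, Lf, Lp, Dd, Dp, kk. auto_derive.
- rewrite E. auto.
- rewrite E.
  assert (H2 : (e * cos phi * sh0 e) ^ 2 + sin phi ^ 2 = sh0 e ^ 2 * (e ^ 2 * cos phi ^ 2 + sin phi ^ 2 / sh0 e ^ 2)) by (field; nz).
  assert (H3 : 0 < (e * cos phi * sh0 e) ^ 2 + sin phi ^ 2) by (rewrite H2; apply Rmult_lt_0_compat; nra).
  field. repeat split; first [apply Rgt_not_eq; nra | apply Rlt_not_eq; nra].
Qed.


Lemma Rbar_mult_C_pinf (C : R) : 0 < C -> Rbar_mult (Finite C) p_infty = p_infty.
Proof. intros. simpl. destruct (Rle_dec 0 C); [|lra]. destruct (Rle_lt_or_eq_dec 0 C r); [reflexivity|lra]. Qed.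

Lemma sup_nonneg (f : R -> R) : Rbar_le (Finite 0) (sup_abs f).
Proof. eapply Rbar_le_trans; [|apply (sup_ge f 0)]. simpl. apply Rabs_pos. Qed.

Lemma rbar_final (h mu : R -> R) (L C : R) : 0 < C ->
  (forall n, (forall x, Rabs (mu x) <= n) -> 0 <= n -> L + L <= C * (n * n)) ->
  (forall x, Rabs (h x) <= L) -> (forall x, Rabs (Derive h x) <= L) ->
  Rbar_le (C1norm h) (Rbar_mult (Finite C) (Rbar_mult (C1norm mu) (C1norm mu))).
Proof.
intros HC Hn H1 H2.
assert (HL : Rbar_le (C1norm h) (Finite (L + L))).
{ unfold C1norm. change (Finite (L + L)) with (Rbar_plus (Finite L) (Finite L)).
  apply Rbar_plus_le_compat; apply sup_le; auto. }
eapply Rbar_le_trans; [exact HL|].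
pose proof (sup_nonneg mu) as P1. pose proof (sup_nonneg (Derive mu)) as P2.
assert (Hmu : forall n, Rbar_le (sup_abs mu) (Finite n) -> forall x, Rabs (mu x) <= n).
{ intros n Hs x. pose proof (Rbar_le_trans _ _ _ (sup_ge mu x) Hs). exact H. }
unfold C1norm.
destruct (sup_abs mu) as [n1| |] eqn:E1; destruct (sup_abs (Derive mu)) as [n2| |] eqn:E2;
  simpl in P1, P2; try contradiction.
- simpl. apply Hn; [|lra]. intros x. pose proof (Hmu n1 (Rle_refl n1) x). lra.
all: simpl; destruct (Rle_dec 0 C) as [r|r]; [destruct (Rle_lt_or_eq_dec 0 C r)|]; simpl; auto; lra.
Qed.


Lemma ellipse_part e c p q r w1 w2 (nu : R -> R) : 0 < e < 1 -> 0 < c ->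
  Rabs p <= / 4 -> Rabs q <= / 4 -> Rabs r <= / 4 ->
  (forall φ, FF e p q r w1 w2 (nu φ) φ = 0) ->
  (forall φ s, - mu0 e <= s -> FF e p q r w1 w2 s φ = 0 -> s = nu φ) ->
  is_ellipse (perturbed_curve e c nu).
Proof.
intros He Hc Hp Hq Hr Hroot Huniq.
pose proof (sh0_pos e He) as Hsh. pose proof (ch0_pos e He) as Hch.
set (Dl := (1 + p) * (1 + r) - q ^ 2).
assert (HDl : 0 < Dl).
{ unfold Dl. apply Rabs_le_between in Hp. apply Rabs_le_between in Hq. apply Rabs_le_between in Hr. nra. }
assert (HDl' : (1 + p) * (1 + r) - q ^ 2 <> 0) by (fold Dl; lra).
exists (c * ch0 e * (1 + r) / Dl), (- (c * ch0 e * q) / Dl), (- (c * sh0 e * q) / Dl), (c * sh0 e * (1 + p) / Dl),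
       (c * ch0 e * (- (1 + r) * w1 + q * w2) / Dl), (c * sh0 e * (q * w1 - (1 + p) * w2) / Dl).
split.
{ replace (c * ch0 e * (1 + r) / Dl * (c * sh0 e * (1 + p) / Dl) - - (c * ch0 e * q) / Dl * (- (c * sh0 e * q) / Dl))
    with (c ^ 2 * ch0 e * sh0 e * ((1 + p) * (1 + r) - q ^ 2) / Dl ^ 2) by (field; nz).
  fold Dl. replace (c ^ 2 * ch0 e * sh0 e * Dl / Dl ^ 2) with (c ^ 2 * ch0 e * sh0 e / Dl) by (field; nz).
  apply Rgt_not_eq. apply Rdiv_lt_0_compat; [|lra]. repeat apply Rmult_lt_0_compat; nra. }
intros P. split.
- intros [φ ->].
  pose proof (Hroot φ) as HF. unfold FF in HF.
  destruct (unit_circle (X1 e p q r w1 w2 (nu φ) φ) (X2 e p q r w1 w2 (nu φ) φ)) as [t [Hct Hst]]; [lra|].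
  exists t. rewrite Hct, Hst. unfold X1, X2, g1, g2, Cs, Ss, ch0. unfold Dl. f_equal; field; repeat split; try exact HDl'; nz.
- intros [t ->].
  set (x := c * ch0 e * (1 + r) / Dl * cos t + - (c * ch0 e * q) / Dl * sin t + c * ch0 e * (- (1 + r) * w1 + q * w2) / Dl).
  set (y := - (c * sh0 e * q) / Dl * cos t + c * sh0 e * (1 + p) / Dl * sin t + c * sh0 e * (q * w1 - (1 + p) * w2) / Dl).
  destruct (ell_coords c x y Hc) as [mu [φ [Hmu [Hx Hy]]]].
  set (s := mu - mu0 e).
  assert (Hs : - mu0 e <= s) by (unfold s; lra).
  assert (Hms : mu0 e + s = mu) by (unfold s; ring).
  assert (Hg1 : g1 e s φ = e * x / c) by (unfold g1, Cs; rewrite Hms, Hx; field; nz).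
  assert (Hg2 : g2 e s φ = y / (c * sh0 e)) by (unfold g2, Ss; rewrite Hms, Hy; field; nz).
  assert (HX1 : X1 e p q r w1 w2 s φ = cos t).
  { unfold X1. rewrite Hg1, Hg2. unfold x, y, ch0, Dl. field. repeat split; try exact HDl'; nz. }
  assert (HX2 : X2 e p q r w1 w2 s φ = sin t).
  { unfold X2. rewrite Hg1, Hg2. unfold x, y, ch0, Dl. field. repeat split; try exact HDl'; nz. }
  assert (HF : FF e p q r w1 w2 s φ = 0).
  { unfold FF. rewrite HX1, HX2. pose proof (sin2_cos2 t). unfold Rsqr in H. nra. }
  pose proof (Huniq φ s Hs HF) as Hsn.
  exists φ. rewrite <- Hsn, Hms. fold x y. rewrite Hx, Hy. reflexivity.
Qed.

Theorem proposition3 (e0 c : R) (he0 : 0 < e0 < 1) (hc : 0 < c) :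
  exists (C delta : R), 0 < delta /\
    forall a0 a1 b1 a2 b2 : R,
      Rabs a0 <= delta -> Rabs a1 <= delta -> Rabs b1 <= delta ->
      Rabs a2 <= delta -> Rabs b2 <= delta ->
      let mu1 := fun phi => a0 * e_h e0 phi + a1 * e_tau1 e0 phi
                 + b1 * e_tau2 e0 phi + a2 * e_hr e0 phi + b2 * e_r e0 phi in
      exists nu : R -> R,
        periodic_C1 nu /\
        is_ellipse (perturbed_curve e0 c nu) /\
        Rbar_le (C1norm (fun phi => mu1 phi - nu phi))
                (Rbar_mult (Finite C) (Rbar_mult (C1norm mu1) (C1norm mu1))).
Proof.
destruct (main_nu e0 he0) as [K [d0' [Hd0' Hmain]]].
pose proof (sh0_pos e0 he0) as Hsh.
set (T := TT e0).
assert (HT : 0 < T) by (unfold T, TT; nra).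
exists (32 * Rabs K / T ^ 2 + 1), (Rmin (d0' * T / 2) (T / 8)).
split.
{ apply Rmin_pos; apply Rdiv_lt_0_compat; nra. }
intros a0 a1 b1 a2 b2 H0 H1 H2 H3 H4 mu1.
assert (Hmu1 : mu1 = mu1f e0 a0 a1 b1 a2 b2) by reflexivity.
set (Am := Rmax (Rabs a0) (Rmax (Rabs a1) (Rmax (Rabs b1) (Rmax (Rabs a2) (Rabs b2))))).
assert (Ha0 : Rabs a0 <= Am) by apply Rmax_l.
assert (Ha1 : Rabs a1 <= Am) by (eapply Rle_trans; [|apply Rmax_r]; apply Rmax_l).
assert (Hb1 : Rabs b1 <= Am) by (eapply Rle_trans; [|apply Rmax_r]; eapply Rle_trans; [|apply Rmax_r]; apply Rmax_l).
assert (Ha2 : Rabs a2 <= Am) by (eapply Rle_trans; [|apply Rmax_r]; eapply Rle_trans; [|apply Rmax_r]; eapply Rle_trans; [|apply Rmax_r]; apply Rmax_l).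
assert (Hb2 : Rabs b2 <= Am) by (eapply Rle_trans; [|apply Rmax_r]; eapply Rle_trans; [|apply Rmax_r]; eapply Rle_trans; [|apply Rmax_r]; apply Rmax_r).
assert (HAmd : Am <= Rmin (d0' * T / 2) (T / 8)) by (unfold Am; repeat apply Rmax_lub; auto).
assert (HAm1 : Am <= d0' * T / 2) by (eapply Rle_trans; [exact HAmd|apply Rmin_l]).
assert (HAm2 : Am <= T / 8) by (eapply Rle_trans; [exact HAmd|apply Rmin_r]).
assert (HAm0 : 0 <= Am) by (pose proof (Rabs_pos a0); lra).
set (A := 2 * Am / T).
assert (HA0 : 0 <= A) by (unfold A; apply Rmult_le_pos; [lra|left; apply Rinv_0_lt_compat; lra]).
assert (HAd : A <= d0').
{ unfold A. apply (Rmult_le_reg_r T); auto. field_simplify; [|lra]. lra. }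
assert (HA4 : A <= / 4).
{ unfold A. apply (Rmult_le_reg_r T); auto. field_simplify; [|lra]. lra. }
set (pp := - (a0 + a2) / T). set (qq := - b2 / T). set (rr := - (a0 - a2) / T).
set (ww1 := - a1 / T). set (ww2 := - b1 / T).
assert (Hdiv : forall x, Rabs x <= 2 * Am -> Rabs (- x / T) <= A).
{ intros x Hx. unfold Rdiv. rewrite Rabs_mult, Rabs_Ropp, Rabs_inv, (Rabs_right T) by lra.
  unfold A. unfold Rdiv. apply Rmult_le_compat_r; [left; apply Rinv_0_lt_compat; lra|lra]. }
assert (Hpp : Rabs pp <= A) by (apply Hdiv; eapply Rle_trans; [apply Rabs_triang|]; lra).
assert (Hqq : Rabs qq <= A) by (apply Hdiv; lra).
assert (Hrr : Rabs rr <= A) by (apply Hdiv; unfold Rminus; eapply Rle_trans; [apply Rabs_triang|]; rewrite Rabs_Ropp; lra).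
assert (Hw1 : Rabs ww1 <= A) by (apply Hdiv; lra).
assert (Hw2 : Rabs ww2 <= A) by (apply Hdiv; lra).
destruct (Hmain pp qq rr ww1 ww2 A HA0 HAd Hpp Hqq Hrr Hw1 Hw2) as [nu [Hper [Hex [Hcont [Hroot [Huniq [HE0 HE1]]]]]]].
exists nu. split; [|split].
- split; [exact Hper|split; [exact Hex|exact Hcont]].
- apply (ellipse_part e0 c pp qq rr ww1 ww2 nu he0 hc); auto; lra.
- assert (Heq : forall phi, mu1 phi = muL e0 pp qq rr ww1 ww2 phi).
  { intros phi. rewrite Hmu1. apply mu1_eq_muL; auto. }
  assert (Hd1 : forall phi, is_derive mu1 phi (muLp e0 pp qq rr ww1 ww2 phi)).
  { intros phi. apply (is_derive_ext (muL e0 pp qq rr ww1 ww2)). intros; symmetry; apply Heq. apply muL_deriv; auto. }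
  apply (rbar_final _ mu1 (Rabs K * A ^ 2)).
  + assert (0 <= Rabs K / T ^ 2) by (apply Rmult_le_pos; [apply Rabs_pos|left; apply Rinv_0_lt_compat; nra]). nra.
  + intros n Hn Hn0.
    destruct (mu1_lower e0 a0 a1 b1 a2 b2 n he0) as [L0 [L1 [L2 [L3 L4]]]].
    { intros phi. rewrite <- Hmu1. apply Hn. }
    assert (HAmn : Am <= 2 * n) by (unfold Am; repeat apply Rmax_lub; auto).
    assert (HAn : A <= 4 * n / T) by (unfold A; unfold Rdiv; apply Rmult_le_compat_r; [left; apply Rinv_0_lt_compat; lra|lra]).
    assert (HA2 : A ^ 2 <= (4 * n / T) ^ 2) by (apply pow_incr; lra).
    assert (E : (4 * n / T) ^ 2 = 16 * (n * n) / T ^ 2) by (field; lra).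
    pose proof (Rabs_pos K).
    assert (Rabs K * A ^ 2 <= Rabs K * (16 * (n * n) / T ^ 2)) by (apply Rmult_le_compat_l; lra).
    assert (Rabs K * (16 * (n * n) / T ^ 2) = 16 * Rabs K / T ^ 2 * (n * n)) by (field; lra).
    assert (0 <= n * n) by nra.
    assert (0 <= Rabs K / T ^ 2 * (n * n)) by (apply Rmult_le_pos; [apply Rmult_le_pos; [lra|left; apply Rinv_0_lt_compat; nra]|lra]).
    replace ((32 * Rabs K / T ^ 2 + 1) * (n * n)) with (32 * (Rabs K / T ^ 2 * (n * n)) + n * n) by (field; lra).
    replace (16 * Rabs K / T ^ 2 * (n * n)) with (16 * (Rabs K / T ^ 2 * (n * n))) in * by (field; lra).
    lra.
  + intros x. rewrite Heq. rewrite Rabs_minus_sym. eapply Rle_trans; [apply HE0|].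
    apply Rmult_le_compat_r; [apply pow2_ge_0|apply Rle_abs].
  + intros x. rewrite Derive_minus; [| eexists; apply Hd1 | apply Hex].
    rewrite (is_derive_unique _ _ _ (Hd1 x)). rewrite Rabs_minus_sym. eapply Rle_trans; [apply HE1|].
    apply Rmult_le_compat_r; [apply pow2_ge_0|apply Rle_abs].
Qed.
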